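(* For every normed plane $(V,\|\cdot\|)$, $$0\le c_S(\|\cdot\|)\le\frac83.$$ Moreover, $c_S(\|\cdot\|)=0$ if and only if the norm is derived from an inner product, and $c_S(\|\cdot\|)=\frac83$ if and only if the plane is rectilinear.
   Context: A normed (Minkowski) plane $(V,\|\cdot\|)$ is a two-dimensional real vector space with a norm; $S=\{v:\|v\|=1\}$ is its unit circle. For nonzero $x,y$, $x$ is Birkhoff orthogonal to $y$, written $x\dashv_B y$, if $\|x+ty\|\ge\|x\|$ for all $t\in\mathbb{R}$ (this forces $x,y$ to be linearly independent). For linearly independent $x,y\in V$, $T_{xy}:V\to V$ is the linear map with $T_{xy}(x)=x$ and $T_{xy}(y)=-y$. The constant $c_S$ is $$c_S(\|\cdot\|)=\sup_{x\dashv_B y}\Big(\sup_{z\in T_{xy}(S)}\|z\|-\inf_{w\in T_{xy}(S)}\|w\|\Big),$$ the outer supremum over all nonzero $x,y\in V$ with $x\dashv_B y$. A normed plane is rectilinear if its unit circle is a parallelogram. *)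

(* Defs.v *)
(* classical reals. A normed plane is modelled as R^2 = R*R
   equipped with an arbitrary norm N (every 2-dimensional real normed space
   is linearly isometric to such a plane). *)
From Stdlib Require Import Reals.
Open Scope R_scope.

Definition vec := (R * R)%type.
Definition vadd (u v : vec) : vec := (fst u + fst v, snd u + snd v).
Definition vscale (s : R) (v : vec) : vec := (s * fst v, s * snd v).
Definition vzero : vec := (0, 0).

Definition is_norm (N : vec -> R) : Prop :=
  (forall v, N v = 0 <-> v = vzero) /\
  (forall s v, N (vscale s v) = Rabs s * N v) /\
  (forall u v, N (vadd u v) <= N u + N v).

Definition unit_circle (N : vec -> R) (v : vec) : Prop := N v = 1.

Definition birkhoff (N : vec -> R) (x y : vec) : Prop :=
  x <> vzero /\ y <> vzero /\
  forall t : R, N (vadd x (vscale t y)) >= N x.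

(* T_xy(S): image of the unit circle under the linear map T_xy with
   T_xy x = x, T_xy y = -y (x, y linearly independent), i.e.
   T_xy (a x + b y) = a x - b y. *)
Definition T_image_S (N : vec -> R) (x y : vec) (z : vec) : Prop :=
  exists a b : R, unit_circle N (vadd (vscale a x) (vscale b y)) /\
                  z = vadd (vscale a x) (vscale (- b) y).

Definition is_lower_bound (E : R -> Prop) (m : R) : Prop :=
  forall x, E x -> m <= x.
Definition is_glb (E : R -> Prop) (m : R) : Prop :=
  is_lower_bound E m /\ (forall b, is_lower_bound E b -> b <= m).

Definition T_norms (N : vec -> R) (x y : vec) (r : R) : Prop :=
  exists z, T_image_S N x y z /\ r = N z.

Definition cS_values (N : vec -> R) (d : R) : Prop :=
  exists x y : vec, birkhoff N x y /\
    exists M m : R, is_lub (T_norms N x y) M /\ is_glb (T_norms N x y) m /\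
                    d = M - m.

Definition is_cS (N : vec -> R) (c : R) : Prop := is_lub (cS_values N) c.

Definition from_inner_product (N : vec -> R) : Prop :=
  exists ip : vec -> vec -> R,
    (forall u v, ip u v = ip v u) /\
    (forall u v w, ip (vadd u v) w = ip u w + ip v w) /\
    (forall s u v, ip (vscale s u) v = s * ip u v) /\
    (forall v, v <> vzero -> 0 < ip v v) /\
    (forall v, N v = sqrt (ip v v)).

Definition segment (p q z : vec) : Prop :=
  exists t : R, 0 <= t <= 1 /\ z = vadd (vscale (1 - t) p) (vscale t q).

(* rectilinear: the unit circle is (the boundary of) a parallelogram with
   vertices a b c d (in order), non-degenerate *)
Definition rectilinear (N : vec -> R) : Prop :=
  exists a b c d : vec,
    vadd a c = vadd b d /\
    (fst b - fst a) * (snd d - snd a) - (snd b - snd a) * (fst d - fst a) <> 0 /\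
    forall z, unit_circle N z <->
      (segment a b z \/ segment b c z \/ segment c d z \/ segment d a z).

(* Main.v *)
Require Import Defs.
From Stdlib Require Import Reals Lra Psatz Classical ZArith.
Open Scope R_scope.

Ltac vsimpl := unfold vadd, vscale, vzero in *; simpl in *.

Lemma pair_eq (a b c d : R) : a = c -> b = d -> (a, b) = (c, d).
Proof. intros; subst; reflexivity. Qed.

Lemma Rabs_m1 : Rabs (-1) = 1.
Proof. unfold Rabs; destruct (Rcase_abs (-1)); lra. Qed.

Lemma N_zero {N} (HN : is_norm N) : N vzero = 0.
Proof. destruct HN as [H _]. apply H. reflexivity. Qed.

Lemma N_scale {N} (HN : is_norm N) s v : N (vscale s v) = Rabs s * N v.
Proof. destruct HN as [_ [H _]]. apply H. Qed.

Lemma N_tri {N} (HN : is_norm N) u v : N (vadd u v) <= N u + N v.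
Proof. destruct HN as [_ [_ H]]. apply H. Qed.

Lemma N_eq0 {N} (HN : is_norm N) v : N v = 0 -> v = vzero.
Proof. destruct HN as [H _]. apply H. Qed.

Lemma N_nonneg {N} (HN : is_norm N) v : 0 <= N v.
Proof.
  assert (H := N_tri HN v (vscale (-1) v)).
  assert (E : vadd v (vscale (-1) v) = vzero).
  { destruct v; vsimpl; apply pair_eq; ring. }
  rewrite E, (N_zero HN), (N_scale HN) in H.
  rewrite Rabs_m1 in H. lra.
Qed.

Lemma N_pos {N} (HN : is_norm N) v : v <> vzero -> 0 < N v.
Proof.
  intros Hv. destruct (N_nonneg HN v) as [H|H]; auto.
  exfalso; apply Hv; apply (N_eq0 HN); auto.
Qed.

Lemma N_opp {N} (HN : is_norm N) v : N (vscale (-1) v) = N v.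
Proof. rewrite (N_scale HN), Rabs_m1; ring. Qed.

Definition vsub u v := vadd u (vscale (-1) v).

Lemma N_sub_sym {N} (HN : is_norm N) u v : N (vsub u v) = N (vsub v u).
Proof.
  unfold vsub. rewrite <- (N_opp HN (vadd u _)). f_equal.
  destruct u, v; vsimpl; apply pair_eq; ring.
Qed.

Lemma N_rev_tri {N} (HN : is_norm N) u v : Rabs (N u - N v) <= N (vsub u v).
Proof.
  assert (H1 := N_tri HN (vsub u v) v).
  assert (H2 := N_tri HN (vsub v u) u).
  assert (E1 : vadd (vsub u v) v = u) by (destruct u, v; vsimpl; apply pair_eq; ring).
  assert (E2 : vadd (vsub v u) u = v) by (destruct u, v; vsimpl; apply pair_eq; ring).
  rewrite E1 in H1; rewrite E2 in H2. rewrite (N_sub_sym HN v u) in H2.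
  apply Rabs_le; lra.
Qed.

Lemma N_coord_bound {N} (HN : is_norm N) a b :
  N (a, b) <= Rabs a * N (1, 0) + Rabs b * N (0, 1).
Proof.
  replace (a, b) with (vadd (vscale a (1,0)) (vscale b (0,1))).
  - rewrite <- !(N_scale HN). apply N_tri; auto.
  - vsimpl; apply pair_eq; ring.
Qed.

Lemma lip_cont (f : R -> R) (L : R) :
  (forall s t, Rabs (f s - f t) <= L * Rabs (s - t)) -> forall x, continuity_pt f x.
Proof.
  intros H x. unfold continuity_pt, continue_in, limit1_in, limit_in.
  intros eps Heps. exists (eps / (Rabs L + 1)). split.
  - apply Rdiv_lt_0_compat; auto. pose proof (Rabs_pos L); lra.
  - intros y [_ Hy]. simpl in *. unfold R_dist in *.
    eapply Rle_lt_trans. apply H.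
    assert (HL : 0 < Rabs L + 1) by (pose proof (Rabs_pos L); lra).
    apply Rle_lt_trans with (Rabs L * Rabs (y - x)).
    + apply Rmult_le_compat_r. apply Rabs_pos. apply Rle_abs.
    + apply Rle_lt_trans with ((Rabs L + 1) * Rabs (y - x)).
      * apply Rmult_le_compat_r. apply Rabs_pos. lra.
      * replace eps with ((Rabs L + 1) * (eps / (Rabs L + 1))) by (field; lra).
        apply Rmult_lt_compat_l; auto.
Qed.

Lemma abs_le_l a b : Rabs a <= b -> -b <= a <= b.
Proof. unfold Rabs; destruct (Rcase_abs a); lra. Qed.
Lemma abs_le_r a b : -b <= a <= b -> Rabs a <= b.
Proof. unfold Rabs; destruct (Rcase_abs a); lra. Qed.
Ltac rabs := unfold Rabs in *; repeat match goal with
  | |- context [Rcase_abs ?a] => destruct (Rcase_abs a)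
  | H : context [Rcase_abs ?a] |- _ => destruct (Rcase_abs a)
  end.


Definition lin (x y : vec) (a b : R) := vadd (vscale a x) (vscale b y).
Definition det (x y : vec) := fst x * snd y - snd x * fst y.

Lemma lin_scale x y a b s : vscale s (lin x y a b) = lin x y (s * a) (s * b).
Proof. destruct x, y; unfold lin; vsimpl; apply pair_eq; ring. Qed.

Lemma bk_indep {N} (HN : is_norm N) x y a b :
  birkhoff N x y -> lin x y a b = vzero -> a = 0 /\ b = 0.
Proof.
  intros [Hx [Hy Hb]] E.
  destruct (Req_dec a 0) as [Ha|Ha].
  - subst. split; auto.
    assert (E2 : vscale b y = vzero).
    { rewrite <- E. destruct x, y; unfold lin; vsimpl; apply pair_eq; ring. }
    assert (H := f_equal N E2). rewrite (N_scale HN), (N_zero HN) in H.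
    pose proof (N_pos HN y Hy). destruct (Rmult_integral _ _ H) as [H1|H1]; [|lra].
    destruct (Req_dec b 0); auto. exfalso. pose proof (Rabs_pos_lt b); lra.
  - exfalso. specialize (Hb (b / a)).
    assert (E2 : vadd x (vscale (b / a) y) = vscale (/ a) (lin x y a b)).
    { destruct x, y; unfold lin; vsimpl; apply pair_eq; field; auto. }
    rewrite E2, E, (N_scale HN), (N_zero HN) in Hb. pose proof (N_pos HN x Hx). lra.
Qed.

Lemma bk_ge {N} (HN : is_norm N) x y a b :
  birkhoff N x y -> Rabs a * N x <= N (lin x y a b).
Proof.
  intros [Hx [Hy Hb]].
  destruct (Req_dec a 0) as [Ha|Ha].
  - subst. rewrite Rabs_R0. pose proof (N_nonneg HN (lin x y 0 b)). lra.
  - specialize (Hb (b / a)).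
    assert (E2 : lin x y a b = vscale a (vadd x (vscale (b / a) y))).
    { destruct x, y; unfold lin; vsimpl; apply pair_eq; field; auto. }
    rewrite E2, (N_scale HN). apply Rmult_le_compat_l. apply Rabs_pos. lra.
Qed.

Lemma bk_det {N} (HN : is_norm N) x y : birkhoff N x y -> det x y <> 0.
Proof.
  intros Hb D. destruct x as [x1 x2], y as [y1 y2]. unfold det in D; simpl in D.
  destruct (Req_dec y2 0) as [H2|H2]; destruct (Req_dec x2 0) as [H3|H3].
  -
    destruct (Req_dec y1 0).
    + destruct Hb as [_ [Hy _]]. apply Hy. subst. reflexivity.
    + destruct (bk_indep HN _ _ y1 (-x1) Hb) as [E1 E2].
      * unfold lin; vsimpl; apply pair_eq; subst; ring.
      * destruct Hb as [Hx _]. apply Hx. subst. unfold vzero; f_equal; lra.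
  - destruct (bk_indep HN _ _ y2 (-x2) Hb) as [E1 E2].
    + unfold lin; vsimpl; apply pair_eq; lra.
    + lra.
  - destruct (bk_indep HN _ _ y2 (-x2) Hb) as [E1 E2].
    + unfold lin; vsimpl; apply pair_eq; lra.
    + lra.
  - destruct (bk_indep HN _ _ y2 (-x2) Hb) as [E1 E2].
    + unfold lin; vsimpl; apply pair_eq; lra.
    + lra.
Qed.

Lemma decomp x y z : det x y <> 0 ->
  z = lin x y (det z y / det x y) (det x z / det x y).
Proof.
  intros D. destruct x, y, z; unfold lin, det in *; vsimpl; apply pair_eq; field; auto.
Qed.

Lemma bk_scale {N} (HN : is_norm N) x y l m :
  birkhoff N x y -> l <> 0 -> m <> 0 -> birkhoff N (vscale l x) (vscale m y).
Proof.
  intros Hb Hl Hm. pose proof Hb as [Hx [Hy Hb']]. split; [|split].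
  - intro E. apply Hx. assert (H := f_equal N E).
    rewrite (N_scale HN), (N_zero HN) in H. apply (N_eq0 HN).
    destruct (Rmult_integral _ _ H) as [H1|H1]; auto.
    exfalso; apply Hl. destruct (Req_dec l 0); auto. pose proof (Rabs_pos_lt l H0); lra.
  - intro E. apply Hy. assert (H := f_equal N E).
    rewrite (N_scale HN), (N_zero HN) in H. apply (N_eq0 HN).
    destruct (Rmult_integral _ _ H) as [H1|H1]; auto.
    exfalso; apply Hm. destruct (Req_dec m 0); auto. pose proof (Rabs_pos_lt m H0); lra.
  - intros t. rewrite (N_scale HN).
    replace (vadd (vscale l x) (vscale t (vscale m y))) with (lin x y l (t * m))
      by (destruct x, y; unfold lin; vsimpl; apply pair_eq; ring).
    apply Rle_ge. apply bk_ge; auto.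
Qed.

Lemma bk_exists {N} (HN : is_norm N) y : y <> vzero -> exists x, birkhoff N x y.
Proof.
  intros Hy. destruct y as [y1 y2].
  set (v := (- y2, y1)).
  assert (Hv : forall t, vadd v (vscale t (y1, y2)) <> vzero).
  { intros t E. unfold v in E; vsimpl. injection E; intros E2 E1.
    apply Hy. assert (y1 * y1 + y2 * y2 = 0) by nra.
    unfold vzero; f_equal; nra. }
  set (phi := fun t => N (vadd v (vscale t (y1, y2)))).
  assert (Hlip : forall s t, Rabs (phi s - phi t) <= N (y1, y2) * Rabs (s - t)).
  { intros s t. unfold phi. eapply Rle_trans. apply (N_rev_tri HN).
    replace (vsub (vadd v (vscale s (y1, y2))) (vadd v (vscale t (y1, y2))))
      with (vscale (s - t) (y1, y2)).
    rewrite (N_scale HN). lra.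
    unfold vsub, v; vsimpl; apply pair_eq; ring. }
  pose proof (N_pos HN _ Hy) as Hny.
  set (K := 2 * N v / N (y1, y2) + 1).
  assert (HK : 0 < K).
  { unfold K. pose proof (N_nonneg HN v).
    assert (0 <= 2 * N v / N (y1, y2)) by (apply Rle_mult_inv_pos; lra). lra. }
  destruct (continuity_ab_min phi (-K) K) as [t0 [Hmin Ht0]].
  - lra.
  - intros; eapply lip_cont; eauto.
  - exists (vadd v (vscale t0 (y1, y2))). split; [apply Hv|split; auto].
    intros s. fold (phi t0).
    replace (vadd (vadd v (vscale t0 (y1, y2))) (vscale s (y1, y2))) with
      (vadd v (vscale (t0 + s) (y1, y2))) by (unfold v; vsimpl; apply pair_eq; ring).
    fold (phi (t0 + s)).
    destruct (Rle_dec (Rabs (t0 + s)) K) as [Hle|Hgt].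
    + apply Rle_ge, Hmin. apply abs_le_l; auto.
    + apply Rle_ge. apply Rle_trans with (phi 0).
      * apply Hmin; lra.
      * assert (E0 : phi 0 = N v).
        { unfold phi. f_equal. unfold v; vsimpl; apply pair_eq; ring. }
        rewrite E0. unfold phi.
        assert (H1 := N_tri HN (vadd v (vscale (t0 + s) (y1, y2))) (vscale (-1) v)).
        replace (vadd (vadd v (vscale (t0 + s) (y1, y2))) (vscale (-1) v))
          with (vscale (t0 + s) (y1, y2)) in H1 by (unfold v; vsimpl; apply pair_eq; ring).
        rewrite (N_scale HN), (N_opp HN) in H1.
        assert (Rabs (t0 + s) * N (y1, y2) >= K * N (y1, y2)).
        { apply Rle_ge, Rmult_le_compat_r; lra. }
        assert (K * N (y1, y2) = 2 * N v + N (y1, y2)) by (unfold K; field; lra).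
        lra.
Qed.


Lemma Tn_iff N x y r : T_norms N x y r <->
  exists a b, N (lin x y a b) = 1 /\ r = N (lin x y a (- b)).
Proof.
  split.
  - intros [z [[a [b [H1 H2]]] H3]]. exists a, b. subst. split; auto.
  - intros [a [b [H1 H2]]]. exists (lin x y a (-b)). split; auto.
    exists a, b. split; auto.
Qed.

Lemma Tn_one {N} (HN : is_norm N) x y : birkhoff N x y -> T_norms N x y 1.
Proof.
  intros Hb. pose proof Hb as [Hx _]. pose proof (N_pos HN x Hx).
  apply Tn_iff. exists (/ N x), 0.
  assert (E : forall b, b = 0 -> lin x y (/ N x) b = vscale (/ N x) x) by
    (intros b ->; destruct x, y; unfold lin; vsimpl; apply pair_eq; ring).
  rewrite !E by lra. rewrite (N_scale HN), Rabs_right.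
  - split; field; lra.
  - left; apply Rinv_0_lt_compat; lra.
Qed.

Lemma Tn_le3 {N} (HN : is_norm N) x y r : birkhoff N x y -> T_norms N x y r -> r <= 3.
Proof.
  intros Hb Hr. apply Tn_iff in Hr. destruct Hr as [a [b [H1 H2]]]. subst r.
  assert (E : lin x y a (-b) = vadd (vscale (2 * a) x) (vscale (-1) (lin x y a b))).
  { destruct x, y; unfold lin; vsimpl; apply pair_eq; ring. }
  rewrite E. eapply Rle_trans. apply (N_tri HN).
  rewrite !(N_scale HN), Rabs_m1, H1, Rabs_mult.
  pose proof (bk_ge HN x y a b Hb). rewrite H1 in H.
  assert (Rabs 2 = 2) by (apply Rabs_right; lra). nra.
Qed.

Lemma Tn_inv {N} (HN : is_norm N) x y r : birkhoff N x y -> T_norms N x y r ->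
  0 < r /\ T_norms N x y (/ r).
Proof.
  intros Hb Hr. apply Tn_iff in Hr. destruct Hr as [a [b [H1 H2]]].
  assert (Hpos : 0 < r).
  { subst r. apply (N_pos HN). intro E.
    destruct (bk_indep HN x y a (-b) Hb E) as [Ea Eb]. subst a.
    assert (b = 0) by lra. subst b.
    replace (lin x y 0 0) with vzero in H1 by (destruct x, y; unfold lin; vsimpl; apply pair_eq; ring).
    rewrite (N_zero HN) in H1. lra. }
  split; auto. apply Tn_iff. exists (a / r), (- b / r). split.
  - replace (lin x y (a / r) (- b / r)) with (vscale (/ r) (lin x y a (-b)))
      by (rewrite lin_scale; f_equal; field; lra).
    rewrite (N_scale HN), <- H2, Rabs_right. field; lra. left; apply Rinv_0_lt_compat; lra.
  - replace (lin x y (a / r) (- (- b / r))) with (vscale (/ r) (lin x y a b))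
      by (rewrite lin_scale; f_equal; field; lra).
    rewrite (N_scale HN), H1, Rabs_right. ring. left; apply Rinv_0_lt_compat; lra.
Qed.

Lemma Tn_lub {N} (HN : is_norm N) x y : birkhoff N x y -> exists M, is_lub (T_norms N x y) M.
Proof.
  intros Hb. destruct (completeness (T_norms N x y)) as [M HM].
  - exists 3. intros r Hr. eapply Tn_le3; eauto.
  - exists 1. apply Tn_one; auto.
  - exists M; auto.
Qed.

Lemma Tn_glb {N} (HN : is_norm N) x y : birkhoff N x y -> exists m, is_glb (T_norms N x y) m.
Proof.
  intros Hb. destruct (completeness (fun r => T_norms N x y (- r))) as [L HL].
  - exists 0. intros r Hr. destruct (Tn_inv HN x y _ Hb Hr). lra.
  - exists (-1). replace (- -1) with 1 by ring. apply Tn_one; auto.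
  - exists (- L). destruct HL as [HL1 HL2]. split.
    + intros r Hr. assert (- r <= L). { apply HL1. rewrite Ropp_involutive. auto. } lra.
    + intros b Hbd. assert (L <= - b).
      { apply HL2. intros r Hr. specialize (Hbd _ Hr). lra. } lra.
Qed.

Lemma value_bounds {N} (HN : is_norm N) x y M m : birkhoff N x y ->
  is_lub (T_norms N x y) M -> is_glb (T_norms N x y) m ->
  1 <= M <= 3 /\ / M <= m <= 1 /\ 0 <= M - m <= 8 / 3.
Proof.
  intros Hb [HM1 HM2] [Hm1 Hm2].
  assert (H1 : 1 <= M) by (apply HM1, Tn_one; auto).
  assert (H3 : M <= 3) by (apply HM2; intros r Hr; eapply Tn_le3; eauto).
  assert (Hm : m <= 1) by (apply Hm1, Tn_one; auto).
  assert (Hinv : / M <= m).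
  { apply Hm2. intros r Hr. destruct (Tn_inv HN x y r Hb Hr) as [Hp Hi].
    apply HM1 in Hi. 
    apply Rle_trans with (/ / r). apply Rinv_le_contravar; auto. apply Rinv_0_lt_compat; auto.
    rewrite Rinv_inv; lra. }
  split; [lra|split; [lra|]].
  split. lra.
  assert (0 < M) by lra.
  assert (M - / M <= 8 / 3).
  { assert (M * M - 8 / 3 * M - 1 <= 0) by nra.
    assert (/ M * M = 1) by (field; lra). nra. }
  lra.
Qed.


Lemma values_bounds {N} (HN : is_norm N) d : cS_values N d -> 0 <= d <= 8 / 3.
Proof.
  intros [x [y [Hb [M [m [HM [Hm ->]]]]]]].
  destruct (value_bounds HN x y M m Hb HM Hm) as [_ [_ H]]. exact H.
Qed.

Lemma values_exist {N} (HN : is_norm N) : exists d, cS_values N d.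
Proof.
  assert (Hy : ((0, 1) : vec) <> vzero) by (unfold vzero; intro E; injection E; lra).
  destruct (bk_exists HN _ Hy) as [x Hb].
  destruct (Tn_lub HN _ _ Hb) as [M HM]. destruct (Tn_glb HN _ _ Hb) as [m Hm].
  exists (M - m). exists x, (0,1). split; auto. exists M, m. auto.
Qed.

Lemma assemble {N} (HN : is_norm N) :
  (from_inner_product N -> forall d, cS_values N d -> d = 0) ->
  ((forall d, cS_values N d -> d <= 0) -> from_inner_product N) ->
  (rectilinear N -> cS_values N (8 / 3)) ->
  ((forall eps, 0 < eps -> exists d, cS_values N d /\ 8 / 3 - eps <= d) -> rectilinear N) ->
  exists c : R, is_cS N c /\
    0 <= c <= 8 / 3 /\
    (c = 0 <-> from_inner_product N) /\
    (c = 8 / 3 <-> rectilinear N).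
Proof.
  intros I1 I2 R1 R2.
  destruct (completeness (cS_values N)) as [c Hc].
  - exists (8/3). intros d Hd. apply (values_bounds HN d Hd).
  - apply (values_exist HN).
  - exists c. pose proof Hc as [Hc1 Hc2]. split; [exact Hc|].
    destruct (values_exist HN) as [d0 Hd0].
    assert (Hc0 : 0 <= c).
    { apply Rle_trans with d0. apply (values_bounds HN d0 Hd0). apply Hc1; auto. }
    assert (Hc8 : c <= 8 / 3).
    { apply Hc2. intros d Hd. apply (values_bounds HN d Hd). }
    split; [lra|split; split].
    + intros ->. apply I2. intros d Hd. apply Hc1; auto.
    + intros HI. apply Rle_antisym; [|exact Hc0]. apply Hc2. intros d Hd.
      rewrite (I1 HI d Hd). lra.
    + intros Hc83. apply R2. intros eps Heps.
      apply NNPP. intros Hn. assert (c <= 8 / 3 - eps).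
      { apply Hc2. intros d Hd. apply Rnot_lt_le. intro Hlt. apply Hn.
        exists d. split; [exact Hd | left; exact Hlt]. }
      lra.
    + intros HR. apply Rle_antisym; [exact Hc8|]. apply Hc1. apply R1; auto.
Qed.


Lemma ip_quad (ip : vec -> vec -> R) :
  (forall u v, ip u v = ip v u) ->
  (forall u v w, ip (vadd u v) w = ip u w + ip v w) ->
  (forall s u v, ip (vscale s u) v = s * ip u v) ->
  forall x y a b, ip (lin x y a b) (lin x y a b) =
    a * a * ip x x + 2 * a * b * ip x y + b * b * ip y y.
Proof.
  intros Hs Ha Hsc x y a b. unfold lin.
  rewrite Ha, !Hsc, (Hs x), (Hs y), !Ha, !Hsc, (Hs y x). ring.
Qed.

Lemma I1 {N} (HN : is_norm N) : from_inner_product N -> forall d, cS_values N d -> d = 0.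
Proof.
  intros [ip [Hs [Ha [Hsc [Hp Hn]]]]] d [x [y [Hb [M [m [HM [Hm ->]]]]]]].
  assert (Q := ip_quad ip Hs Ha Hsc).
  assert (Hnn : forall v, 0 <= ip v v).
  { intros v. destruct (classic (v = vzero)) as [->|Hv].
    - replace vzero with (vscale 0 vzero) by (vsimpl; apply pair_eq; ring).
      rewrite Hsc. lra.
    - left; apply Hp; auto. }
  pose proof Hb as [Hx [Hy Hbk]].
  assert (Hyy : 0 < ip y y) by (apply Hp; auto).
  assert (Hxy : ip x y = 0).
  { set (t := - ip x y / ip y y).
    specialize (Hbk t). rewrite !Hn in Hbk.
    replace (vadd x (vscale t y)) with (lin x y 1 t) in Hbk
      by (destruct x, y; unfold lin; vsimpl; apply pair_eq; ring).
    rewrite Q in Hbk. apply Rge_le in Hbk. apply sqrt_le_0 in Hbk.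
    2: apply Hnn. 2: { rewrite <- Q. apply Hnn. }
    unfold t in Hbk. 
    assert (E : 1 * 1 * ip x x + 2 * 1 * (- ip x y / ip y y) * ip x y +
      - ip x y / ip y y * (- ip x y / ip y y) * ip y y = ip x x - ip x y * ip x y / ip y y)
      by (field; lra).
    rewrite E in Hbk.
    assert (0 <= - (ip x y * ip x y / ip y y)) by lra.
    assert (0 <= ip x y * ip x y / ip y y) by (apply Rle_mult_inv_pos; nra).
    assert (ip x y * ip x y / ip y y * ip y y = ip x y * ip x y) by (field; lra).
    nra. }
  assert (Hall : forall r, T_norms N x y r -> r = 1).
  { intros r Hr. apply Tn_iff in Hr. destruct Hr as [a [b [H1 H2]]].
    rewrite H2, <- H1, !Hn, !Q, Hxy. f_equal. ring. }
  assert (M = 1).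
  { destruct HM as [HM1 HM2]. apply Rle_antisym.
    - apply HM2. intros r Hr. rewrite (Hall r Hr). lra.
    - apply HM1. apply Tn_one; auto. }
  assert (m = 1).
  { destruct Hm as [Hm1 Hm2]. apply Rle_antisym.
    - apply Hm1. apply Tn_one; auto.
    - apply Hm2. intros r Hr. rewrite (Hall r Hr). lra. }
  lra.
Qed.


Ltac vdestr := repeat match goal with v : vec |- _ => destruct v end.
Ltac veq := vdestr; unfold lin, vsub, det in *; vsimpl; apply pair_eq; field; repeat split; try lra.

Definition sqb (a b : R) := Rabs a <= 1 /\ Rabs b <= 1 /\ (Rabs a = 1 \/ Rabs b = 1).

Lemma lin_inj u v a b a' b' : det u v <> 0 -> lin u v a b = lin u v a' b' -> a = a' /\ b = b'.
Proof.
  intros D E. destruct u as [u1 u2], v as [v1 v2]. unfold lin, det in *; vsimpl.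
  injection E; intros E2 E1.
  assert (H1 : (a - a') * (u1 * v2 - u2 * v1) = 0).
  { replace ((a - a') * (u1 * v2 - u2 * v1)) with
      (v2 * ((a * u1 + b * v1) - (a' * u1 + b' * v1)) - v1 * ((a * u2 + b * v2) - (a' * u2 + b' * v2))) by ring.
    rewrite E1, E2. ring. }
  assert (H2 : (b - b') * (u1 * v2 - u2 * v1) = 0).
  { replace ((b - b') * (u1 * v2 - u2 * v1)) with
      (u1 * ((a * u2 + b * v2) - (a' * u2 + b' * v2)) - u2 * ((a * u1 + b * v1) - (a' * u1 + b' * v1))) by ring.
    rewrite E1, E2. ring. }
  destruct (Rmult_integral _ _ H1); destruct (Rmult_integral _ _ H2); split; lra.
Qed.

Lemma sqb_neg a b : sqb a b -> sqb (-a) (-b).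
Proof. unfold sqb. rewrite !Rabs_Ropp. auto. Qed.

Lemma rect_coords {N} (HN : is_norm N) : rectilinear N ->
  exists u v, det u v <> 0 /\ forall a b, N (lin u v a b) = Rmax (Rabs a) (Rabs b).
Proof.
  intros [a [b [c [d [Had [Hdet Hs]]]]]].
  set (o := vscale (1/2) (vadd a c)).
  set (u := vscale (1/2) (vsub a b)).
  set (v := vscale (1/2) (vsub a d)).
  assert (Hc : c = vadd (vadd o (vscale (-1) u)) (vscale (-1) v)).
  { unfold o, u, v. vdestr. unfold vsub in *; vsimpl. injection Had; intros.
    apply pair_eq; lra. }
  assert (Hd : d = vadd (vadd o u) (vscale (-1) v)).
  { unfold o, u, v. vdestr. unfold vsub in *; vsimpl. injection Had; intros.
    apply pair_eq; lra. }
  assert (Ha : a = vadd (vadd o u) v).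
  { unfold o, u, v. vdestr. unfold vsub in *; vsimpl. injection Had; intros.
    apply pair_eq; lra. }
  assert (Hb : b = vadd (vadd o (vscale (-1) u)) v).
  { unfold o, u, v. vdestr. unfold vsub in *; vsimpl. injection Had; intros.
    apply pair_eq; lra. }
  assert (D : det u v <> 0).
  { intro E. apply Hdet. unfold u, v in E. vdestr. unfold det, vsub in *; vsimpl.
    lra. }
  clearbody o u v. subst a b c d.
  assert (Hunit : forall z, N z = 1 <-> exists al be, sqb al be /\ z = vadd o (lin u v al be)).
  { intros z. change (N z = 1) with (unit_circle N z). rewrite (Hs z). split.
    - intros Hz. unfold segment in Hz.
      destruct Hz as [[t [Ht ->]]|[[t [Ht ->]]|[[t [Ht ->]]|[t [Ht ->]]]]].
      + exists (1 - 2 * t), 1. split. unfold sqb; rabs; lra. veq.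
      + exists (-1), (1 - 2 * t). split. unfold sqb; rabs; lra. veq.
      + exists (2 * t - 1), (-1). split. unfold sqb; rabs; lra. veq.
      + exists 1, (2 * t - 1). split. unfold sqb; rabs; lra. veq.
    - intros [al [be [[H1 [H2 H3]] ->]]]. unfold segment.
      destruct H3 as [H3|H3].
      + assert (al = 1 \/ al = -1) as [->| ->] by (revert H3; rabs; lra).
        * right; right; right. exists ((be + 1) / 2). split. apply abs_le_l in H2; lra. veq.
        * right; left. exists ((1 - be) / 2). split. apply abs_le_l in H2; lra. veq.
      + assert (be = 1 \/ be = -1) as [->| ->] by (revert H3; rabs; lra).
        * left. exists ((1 - al) / 2). split. apply abs_le_l in H1; lra. veq.
        * right; right; left. exists ((al + 1) / 2). split. apply abs_le_l in H1; lra. veq. }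
  pose proof (decomp u v o D) as Eo.
  set (g := det o v / det u v) in *. set (h := det u o / det u v) in *. clearbody g h.
  assert (Hstep : forall al be, sqb al be -> sqb (al + 2 * g) (be + 2 * h)).
  { intros al be Hab.
    assert (H1 : N (vscale (-1) (vadd o (lin u v al be))) = 1).
    { rewrite (N_opp HN). apply Hunit. eauto. }
    apply Hunit in H1. destruct H1 as [al' [be' [Hab' E]]].
    assert (E2 : lin u v (- 2 * g - al) (- 2 * h - be) = lin u v al' be').
    { assert (E3 : lin u v (- 2 * g - al) (- 2 * h - be) =
        vsub (vscale (-1) (vadd o (lin u v al be))) o).
      { rewrite Eo. veq. }
      rewrite E3, E. veq. }
    apply lin_inj in E2; auto. destruct E2 as [<- <-].
    apply sqb_neg in Hab'. replace (- (- 2 * g - al)) with (al + 2 * g) in Hab' by ring.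
    replace (- (- 2 * h - be)) with (be + 2 * h) in Hab' by ring. auto. }
  assert (Hk : forall k : nat, sqb (1 + 2 * INR k * g) (2 * INR k * h)).
  { induction k.
    - simpl. unfold sqb; rabs; lra.
    - rewrite S_INR. apply Hstep in IHk.
      replace (1 + 2 * (INR k + 1) * g) with (1 + 2 * INR k * g + 2 * g) by ring.
      replace (2 * (INR k + 1) * h) with (2 * INR k * h + 2 * h) by ring. auto. }
  assert (Hg : g = 0 /\ h = 0).
  { split; apply NNPP; intro Hne.
    - destruct (archimed (/ Rabs g)) as [Hz _].
      set (k := Z.to_nat (up (/ Rabs g))).
      assert (INR k = IZR (up (/ Rabs g))).
      { unfold k. rewrite INR_IZR_INZ, Z2Nat.id; auto.
        apply le_IZR. pose proof (Rabs_pos_lt g Hne). 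
        assert (0 < / Rabs g) by (apply Rinv_0_lt_compat; auto). lra. }
      destruct (Hk k) as [H1 _]. apply abs_le_l in H1.
      pose proof (Rabs_pos_lt g Hne).
      assert (INR k * Rabs g > 1).
      { rewrite H. apply Rlt_gt. apply Rmult_lt_reg_r with (/ Rabs g).
        apply Rinv_0_lt_compat; auto. rewrite Rmult_assoc, Rinv_r by lra. lra. }
      revert H1 H2. rabs; nra.
    - destruct (archimed (/ Rabs h)) as [Hz _].
      set (k := Z.to_nat (up (/ Rabs h))).
      assert (INR k = IZR (up (/ Rabs h))).
      { unfold k. rewrite INR_IZR_INZ, Z2Nat.id; auto.
        apply le_IZR. pose proof (Rabs_pos_lt h Hne). 
        assert (0 < / Rabs h) by (apply Rinv_0_lt_compat; auto). lra. }
      destruct (Hk k) as [_ [H1 _]]. apply abs_le_l in H1.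
      pose proof (Rabs_pos_lt h Hne).
      assert (INR k * Rabs h > 1).
      { rewrite H. apply Rlt_gt. apply Rmult_lt_reg_r with (/ Rabs h).
        apply Rinv_0_lt_compat; auto. rewrite Rmult_assoc, Rinv_r by lra. lra. }
      revert H1 H2. rabs; nra. }
  destruct Hg as [-> ->].
  assert (Ho : o = vzero) by (rewrite Eo; veq). subst o.
  exists u, v. split; auto. intros al be.
  destruct (classic (al = 0 /\ be = 0)) as [[-> ->]|Hne].
  - replace (lin u v 0 0) with vzero by veq. rewrite (N_zero HN), Rabs_R0.
    unfold Rmax; destruct (Rle_dec 0 0); lra.
  - set (s := Rmax (Rabs al) (Rabs be)).
    assert (Hs0 : 0 < s).
    { pose proof (Rmax_l (Rabs al) (Rabs be)). pose proof (Rmax_r (Rabs al) (Rabs be)).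
      fold s in H, H0. destruct (Req_dec al 0).
      - assert (be <> 0) by tauto. pose proof (Rabs_pos_lt be H2). lra.
      - pose proof (Rabs_pos_lt al H1). lra. }
    assert (H1 : N (vadd vzero (lin u v (al / s) (be / s))) = 1).
    { apply Hunit. exists (al / s), (be / s). split; [|veq].
      unfold sqb, Rdiv. rewrite !Rabs_mult, Rabs_inv, (Rabs_right s) by lra.
      pose proof (Rmax_l (Rabs al) (Rabs be)). pose proof (Rmax_r (Rabs al) (Rabs be)).
      fold s in H, H0.
      assert (HH : forall x, x <= s -> x * / s <= 1).
      { intros x Hx. apply Rmult_le_reg_r with s; [lra|]. rewrite Rmult_assoc, Rinv_l by lra; lra. }
      split. apply HH; lra. split. apply HH; lra.
      clear HH. unfold s, Rmax in *. destruct (Rle_dec (Rabs al) (Rabs be)).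
      all: try (right; apply Rinv_r; lra); try (left; apply Rinv_r; lra); try lra.
      }
    replace (vadd vzero (lin u v (al / s) (be / s))) with (vscale (/ s) (lin u v al be)) in H1 by veq.
    rewrite (N_scale HN), Rabs_right in H1.
    + apply Rmult_eq_reg_l with (/ s). rewrite H1; field; lra.
      apply Rinv_neq_0_compat; lra.
    + left; apply Rinv_0_lt_compat; lra.
Qed.


Ltac rmx := unfold Rmax in *; repeat match goal with
  | |- context [Rle_dec ?a ?b] => destruct (Rle_dec a b)
  | H : context [Rle_dec ?a ?b] |- _ => destruct (Rle_dec a b)
  end.

Lemma R1 {N} (HN : is_norm N) : rectilinear N -> cS_values N (8 / 3).
Proof.
  intros HR. destruct (rect_coords HN HR) as [u [v [D Hn]]].
  set (x := lin u v 1 1). set (y := lin u v 1 0).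
  assert (Hl : forall a b, lin x y a b = lin u v (a + b) a) by (intros; unfold x, y; veq).
  assert (Hb : birkhoff N x y).
  { split; [|split].
    - intro E. assert (H := f_equal N E). unfold x in H. rewrite Hn, (N_zero HN) in H.
      revert H. rmx; rabs; lra.
    - intro E. assert (H := f_equal N E). unfold y in H. rewrite Hn, (N_zero HN) in H.
      revert H. rmx; rabs; lra.
    - intros t. replace (vadd x (vscale t y)) with (lin x y 1 t) by (unfold x, y; veq).
      rewrite Hl, Hn. unfold x. rewrite Hn. rmx; rabs; lra. }
  assert (HT : forall r, T_norms N x y r <->
    exists a b, Rmax (Rabs (a + b)) (Rabs a) = 1 /\ r = Rmax (Rabs (a - b)) (Rabs a)).
  { intros r. rewrite Tn_iff. split; intros [a [b [H1 H2]]]; exists a, b;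
      rewrite ?Hl, ?Hn in *; (replace (a + - b) with (a - b) in * by ring); auto. }
  exists x, y. split; auto. exists 3, (1/3). split; [|split].
  - split.
    + intros r Hr. apply HT in Hr. destruct Hr as [a [b [H1 ->]]]. revert H1. rmx; rabs; lra.
    + intros b Hbd. apply Hbd. apply HT. exists 1, (-2). split; rmx; rabs; lra.
  - split.
    + intros r Hr. apply HT in Hr. destruct Hr as [a [b [H1 ->]]]. revert H1. rmx; rabs; lra.
    + intros b Hbd. apply Hbd. apply HT. exists (1/3), (2/3). split; rmx; rabs; lra.
  - lra.
Qed.


Definition clamp s := Rmax (-1) (Rmin s 3).
Definition e0 (s : R) : vec := if Rle_dec s 1 then (1, s) else (2 - s, 1).
Definition ee s := e0 (clamp s).

Lemma clamp_lip s t : Rabs (clamp s - clamp t) <= Rabs (s - t).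
Proof. unfold clamp, Rmin. rmx; repeat destruct Rle_dec; rabs; lra. Qed.

Lemma clamp_id s : -1 <= s <= 3 -> clamp s = s.
Proof. intros. unfold clamp, Rmin. rmx; repeat destruct Rle_dec; lra. Qed.

Lemma e0_lip {N} (HN : is_norm N) s t :
  N (vsub (e0 s) (e0 t)) <= (N (1, 0) + N (0, 1)) * Rabs (s - t).
Proof.
  pose proof (N_nonneg HN (1,0)). pose proof (N_nonneg HN (0,1)).
  unfold e0, vsub. destruct (Rle_dec s 1); destruct (Rle_dec t 1); vsimpl;
  eapply Rle_trans; try apply (N_coord_bound HN);
  match goal with |- ?a * ?x + ?b * ?y <= _ => 
    assert (a <= Rabs (s - t)) by (rabs; lra); assert (b <= Rabs (s - t)) by (rabs; lra) end;
  nra.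
Qed.

Lemma ee_lip {N} (HN : is_norm N) s t :
  N (vsub (ee s) (ee t)) <= (N (1, 0) + N (0, 1)) * Rabs (s - t).
Proof.
  eapply Rle_trans. apply e0_lip; auto. apply Rmult_le_compat_l.
  pose proof (N_nonneg HN (1,0)). pose proof (N_nonneg HN (0,1)). lra.
  apply clamp_lip.
Qed.

Lemma e0_ne s : e0 s <> vzero.
Proof. unfold e0, vzero. destruct (Rle_dec s 1); intro E; injection E; lra. Qed.

Lemma ee_ne s : ee s <> vzero.
Proof. apply e0_ne. Qed.

Lemma Nee_lip {N} (HN : is_norm N) s t :
  Rabs (N (ee s) - N (ee t)) <= (N (1, 0) + N (0, 1)) * Rabs (s - t).
Proof. eapply Rle_trans. apply (N_rev_tri HN). apply ee_lip; auto. Qed.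

Lemma kappa {N} (HN : is_norm N) : exists k, 0 < k /\ forall s, k <= N (ee s).
Proof.
  destruct (continuity_ab_min (fun s => N (ee s)) (-1) 3) as [m [Hm Hm3]].
  - lra.
  - intros; eapply lip_cont. intros; apply (Nee_lip HN).
  - exists (N (ee m)). split. apply (N_pos HN), ee_ne.
    intros s. unfold ee. rewrite <- (clamp_id (clamp s)).
    + apply (Hm (clamp s)). unfold clamp, Rmin. rmx; repeat destruct Rle_dec; lra.
    + unfold clamp, Rmin. rmx; repeat destruct Rle_dec; lra.
Qed.

Definition XX N s := vscale (/ N (ee s)) (ee s).

Lemma XX_unit {N} (HN : is_norm N) s : N (XX N s) = 1.
Proof.
  unfold XX. rewrite (N_scale HN). pose proof (N_pos HN _ (ee_ne s)).
  rewrite Rabs_right. field; lra. left; apply Rinv_0_lt_compat; lra.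
Qed.

Lemma XX_lip {N} (HN : is_norm N) : exists L, 0 <= L /\
  forall s t, N (vsub (XX N s) (XX N t)) <= L * Rabs (s - t).
Proof.
  destruct (kappa HN) as [k [Hk Hke]].
  set (K := N (1, 0) + N (0, 1)).
  assert (HK : 0 <= K) by (pose proof (N_nonneg HN (1,0)); pose proof (N_nonneg HN (0,1)); unfold K; lra).
  exists (2 * K / k). split. apply Rle_mult_inv_pos; lra.
  intros s t. unfold XX.
  set (a := N (ee s)). set (b := N (ee t)).
  assert (Ha : k <= a) by apply Hke. assert (Hb : k <= b) by apply Hke.
  replace (vsub (vscale (/ a) (ee s)) (vscale (/ b) (ee t))) with
    (vadd (vscale (/ a) (vsub (ee s) (ee t))) (vscale ((b - a) / (a * b)) (ee t)))
    by veq.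
  eapply Rle_trans. apply (N_tri HN). rewrite !(N_scale HN). fold b.
  assert (H1 := ee_lip HN s t). fold K in H1.
  assert (H2 := Nee_lip HN t s). fold K in H2. fold a b in H2.
  rewrite (Rabs_right (/ a)) by (left; apply Rinv_0_lt_compat; lra).
  unfold Rdiv. rewrite Rabs_mult, (Rabs_right (/ (a * b))) by (left; apply Rinv_0_lt_compat; nra).
  rewrite (Rabs_minus_sym t s) in H2.
  set (D := N (vsub (ee s) (ee t))) in *.
  set (r := Rabs (s - t)) in *.
  assert (0 <= r) by apply Rabs_pos.
  assert (E1 : / a * D <= K * r / k).
  { apply Rle_trans with (D / k). 
    - unfold Rdiv. rewrite Rmult_comm. apply Rmult_le_compat_l. pose proof (N_nonneg HN (vsub (ee s) (ee t))); auto.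
      apply Rinv_le_contravar; lra.
    - unfold Rdiv. apply Rmult_le_compat_r. left; apply Rinv_0_lt_compat; lra. lra. }
  assert (E2 : Rabs (b - a) * / (a * b) * b <= K * r / k).
  { replace (Rabs (b - a) * / (a * b) * b) with (Rabs (b - a) / a) by (field; lra).
    apply Rle_trans with (Rabs (b - a) / k).
    - unfold Rdiv. apply Rmult_le_compat_l. apply Rabs_pos. apply Rinv_le_contravar; lra.
    - unfold Rdiv. apply Rmult_le_compat_r. left; apply Rinv_0_lt_compat; lra. lra. }
  replace (2 * K / k * r) with (K * r / k + K * r / k) by (field; lra). lra.
Qed.

Lemma ratio_bound p q : Rabs p <= Rabs q -> q <> 0 -> -1 <= p / q <= 1.
Proof.
  intros H Hq. apply abs_le_l. unfold Rdiv. rewrite Rabs_mult, Rabs_inv.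
  pose proof (Rabs_pos_lt q Hq).
  apply Rmult_le_reg_r with (Rabs q); auto. rewrite Rmult_assoc, Rinv_l by lra. lra.
Qed.

Lemma XX_cover {N} (HN : is_norm N) z : N z = 1 ->
  exists s, -1 <= s <= 3 /\ (z = XX N s \/ z = vscale (-1) (XX N s)).
Proof.
  intros Hz. destruct z as [z1 z2].
  assert (Hnz : (z1, z2) <> vzero) by (intro E; rewrite E, (N_zero HN) in Hz; lra).
  assert (key : forall s l, -1 <= s <= 3 -> l <> 0 -> ee s = vscale l (z1, z2) ->
    exists s, -1 <= s <= 3 /\ ((z1, z2) = XX N s \/ (z1, z2) = vscale (-1) (XX N s))).
  { intros s l Hs Hl E. exists s. split; auto. unfold XX. rewrite E, (N_scale HN), Hz, Rmult_1_r.
    destruct (Rle_dec 0 l).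
    - left. rewrite Rabs_right by lra. veq. 
    - right. rewrite Rabs_left by lra. veq. }
  destruct (Rle_dec (Rabs z2) (Rabs z1)).
  - assert (z1 <> 0).
    { intro E; subst. apply Hnz. assert (z2 = 0) by (revert r; rabs; lra). subst; reflexivity. }
    pose proof (ratio_bound z2 z1 r H).
    apply (key (z2 / z1) (/ z1)).
    + lra.
    + apply Rinv_neq_0_compat; auto.
    + unfold ee. rewrite clamp_id by lra. unfold e0. destruct Rle_dec; [veq|lra].
  - assert (z2 <> 0).
    { intro E; subst. rewrite Rabs_R0 in n. pose proof (Rabs_pos z1). lra. }
    assert (r : Rabs z1 < Rabs z2) by lra.
    pose proof (ratio_bound z1 z2 (Rlt_le _ _ r) H).
    assert (z1 / z2 < 1).
    { destruct H0 as [_ [H0|H0]]; auto. exfalso.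
      assert (E : z1 = z1 / z2 * z2) by (field; auto). rewrite H0, Rmult_1_l in E.
      rewrite E in r. lra. }
    apply (key (2 - z1 / z2) (/ z2)).
    + lra.
    + apply Rinv_neq_0_compat; auto.
    + unfold ee. rewrite clamp_id by lra. unfold e0. destruct Rle_dec; [lra|veq].
Qed.



Definition ISO N := forall x y a b, birkhoff N x y -> N (lin x y a (- b)) = N (lin x y a b).

Lemma arch_le0 a b : (forall k : nat, INR k * a <= b) -> a <= 0.
Proof.
  intros H. apply Rnot_lt_le. intro Ha.
  destruct (archimed (b / a)) as [Hz _].
  set (k := Z.to_nat (up (b / a))).
  assert (Hb : 0 <= b) by (specialize (H 0%nat); simpl in H; lra).
  assert (INR k = IZR (up (b / a))).
  { unfold k. rewrite INR_IZR_INZ, Z2Nat.id; auto.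
    apply le_IZR. assert (0 <= b / a) by (apply Rle_mult_inv_pos; lra). lra. }
  specialize (H k). rewrite H0 in H.
  assert (b / a * a < IZR (up (b / a)) * a) by (apply Rmult_lt_compat_r; lra).
  replace (b / a * a) with b in H1 by (field; lra). lra.
Qed.

Lemma iso_of_values {N} (HN : is_norm N) : (forall d, cS_values N d -> d <= 0) -> ISO N.
Proof.
  intros Hd x y a b Hb.
  destruct (Tn_lub HN _ _ Hb) as [M HM]. destruct (Tn_glb HN _ _ Hb) as [m Hm].
  assert (Hv : M - m <= 0) by (apply Hd; exists x, y; split; auto; exists M, m; auto).
  destruct (value_bounds HN x y M m Hb HM Hm) as [H1 [H2 _]].
  assert (Hall : forall r, T_norms N x y r -> r = 1).
  { intros r Hr. destruct HM as [HM1 _]. destruct Hm as [Hm1 _].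
    specialize (HM1 r Hr). specialize (Hm1 r Hr). lra. }
  set (s := N (lin x y a b)).
  destruct (Req_dec s 0) as [Hs|Hs].
  - apply (N_eq0 HN) in Hs. destruct (bk_indep HN x y a b Hb Hs) as [-> ->].
    replace (- 0) with 0 by ring. reflexivity.
  - assert (Hsp : 0 < s) by (pose proof (N_nonneg HN (lin x y a b)); unfold s in *; lra).
    assert (Hr : T_norms N x y (N (lin x y (a / s) (- (b / s))))).
    { apply Tn_iff. exists (a / s), (b / s). split; auto.
      replace (lin x y (a / s) (b / s)) with (vscale (/ s) (lin x y a b)) by veq.
      rewrite (N_scale HN), Rabs_right. fold s. field; lra. left; apply Rinv_0_lt_compat; lra. }
    apply Hall in Hr.
    replace (lin x y (a / s) (- (b / s))) with (vscale (/ s) (lin x y a (- b))) in Hr by veq.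
    rewrite (N_scale HN), Rabs_right in Hr by (left; apply Rinv_0_lt_compat; lra).
    apply (Rmult_eq_reg_l (/ s)). rewrite Hr. fold s. field; lra.
    apply Rinv_neq_0_compat; lra.
Qed.

(* key "shear" lemma: if C fixes u and moves v by multiples of u, norms force zero *)
Lemma no_shear {N} (HN : is_norm N) (u d : vec) :
  (forall k : nat, N (vsub d (vscale (INR k) u)) = N d) -> N u = 0.
Proof.
  intros H. apply Rle_antisym; [|apply (N_nonneg HN)].
  apply (arch_le0 _ (2 * N d)). intros k.
  assert (E : vscale (INR k) u = vsub d (vsub d (vscale (INR k) u))) by veq.
  rewrite <- (Rabs_right (INR k)) by (apply Rle_ge, pos_INR).
  rewrite <- (N_scale HN), E. unfold vsub at 1. eapply Rle_trans. apply (N_tri HN).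
  rewrite (N_opp HN), H. lra.
Qed.

Lemma strict_conv {N} (HN : is_norm N) (HI : ISO N) p q :
  N p = 1 -> N q = 1 -> N (vscale (1/2) (vadd p q)) = 1 -> p = q.
Proof.
  intros Hp Hq Hm. apply NNPP. intro Hne.
  set (m := vscale (1/2) (vadd p q)) in *. set (d := vsub q p).
  assert (Hd : d <> vzero) by (intro E; apply Hne; unfold d in E; vdestr; unfold vsub in *; vsimpl;
    injection E; intros; apply pair_eq; lra).
  assert (Hmd : forall s, 1 <= N (vadd m (vscale s d))).
  { intros s. destruct (Rle_dec 0 s).
    - assert (E : vscale (s + 1/2) m = vadd (vscale s p) (vscale (1/2) (vadd m (vscale s d))))
        by (unfold m, d; veq).
      assert (H := f_equal N E). rewrite (N_scale HN), Hm in H.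
      assert (H2 := N_tri HN (vscale s p) (vscale (1/2) (vadd m (vscale s d)))).
      rewrite <- H, !(N_scale HN), Hp in H2. rewrite !Rabs_right in H2 by lra. lra.
    - assert (E : vscale (1/2 - s) m = vadd (vscale (- s) q) (vscale (1/2) (vadd m (vscale s d))))
        by (unfold m, d; veq).
      assert (H := f_equal N E). rewrite (N_scale HN), Hm in H.
      assert (H2 := N_tri HN (vscale (- s) q) (vscale (1/2) (vadd m (vscale s d)))).
      rewrite <- H, !(N_scale HN), Hq in H2. rewrite !Rabs_right in H2 by lra. lra. }
  assert (Hm0 : m <> vzero) by (intro E; rewrite E, (N_zero HN) in Hm; lra).
  assert (Hp0 : p <> vzero) by (intro E; rewrite E, (N_zero HN) in Hp; lra).
  assert (Bm : birkhoff N m d).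
  { split; [auto|split; [auto|]]. intros t. rewrite Hm. apply Rle_ge, Hmd. }
  assert (Bp : birkhoff N p d).
  { split; [auto|split; [auto|]]. intros t. rewrite Hp.
    replace (vadd p (vscale t d)) with (vadd m (vscale (t - 1/2) d)) by (unfold m, d; veq).
    apply Rle_ge, Hmd. }
  assert (Hk : forall k : nat, N (vsub m (vscale (INR k) d)) = N m).
  { induction k.
    - f_equal. simpl. veq.
    - rewrite <- IHk. rewrite S_INR.
      transitivity (N (lin p d 1 (- (INR k + 1/2)))).
      { f_equal. unfold m, d; veq. }
      rewrite HI by auto.
      transitivity (N (lin m d 1 (- - INR k))).
      { f_equal. unfold m, d; veq. }
      rewrite HI by auto. f_equal. veq. }
  apply Hd. apply (N_eq0 HN). apply (no_shear HN d m). intros k. rewrite Hk. reflexivity.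
Qed.

Lemma corner {N} (HN : is_norm N) (HI : ISO N) w t d :
  birkhoff N w t -> birkhoff N w d -> det t d = 0.
Proof.
  intros Bt Bd. apply NNPP. intro Hdet.
  pose proof (bk_det HN _ _ Bt) as Dwt.
  pose proof (decomp w t d Dwt) as Ed.
  set (a := det d t / det w t) in *. set (b := det w d / det w t) in *. clearbody a b.
  assert (Ha : a <> 0).
  { intro E. subst a. apply Hdet. rewrite Ed. unfold lin, det; vdestr; vsimpl. ring. }
  assert (Hk : forall k : nat, N (vsub d (vscale (INR k) (vscale (2 * a) w))) = N d).
  { induction k.
    - f_equal. simpl. veq.
    - rewrite <- IHk. rewrite S_INR.
      transitivity (N (lin w t (- a - 2 * INR k * a) (- - b))).
      { f_equal. rewrite Ed. veq. }
      rewrite HI by auto.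
      transitivity (N (lin w d (- 2 * INR k * a) (- (1)))).
      { f_equal. rewrite Ed. veq. }
      rewrite HI by auto. f_equal. veq. }
  apply no_shear in Hk; auto. rewrite (N_scale HN) in Hk.
  pose proof (N_pos HN w (proj1 Bt)).
  assert (Rabs (2 * a) = 0) by (destruct (Rmult_integral _ _ Hk); lra).
  apply Ha. assert (2 * a = 0) by (apply NNPP; intro; pose proof (Rabs_pos_lt _ H1); lra). lra.
Qed.


Lemma isosceles {N} (HN : is_norm N) (HI : ISO N) x0 w :
  N x0 = 1 -> N w = 1 -> w <> x0 -> w <> vscale (-1) x0 ->
  birkhoff N (vadd x0 w) (vsub x0 w).
Proof.
  intros H0 Hw Hne1 Hne2.
  set (y := vsub x0 w).
  assert (Hy : y <> vzero).
  { intro E. apply Hne1. unfold y in E. vdestr; unfold vsub in *; vsimpl. injection E; intros.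
    apply pair_eq; lra. }
  destruct (bk_exists HN y Hy) as [x Bx].
  pose proof (bk_det HN _ _ Bx) as D.
  pose proof (decomp x y x0 D) as E0.
  set (a := det x0 y / det x y) in *. set (b := det x x0 / det x y) in *. clearbody a b.
  assert (Ew : w = lin x y a (b - 1)) by (assert (w = vsub x0 y) by (unfold y; veq); rewrite H, E0; veq).
  set (phi := fun t => N (lin x y a t)).
  assert (Hev : forall t, phi (Rabs t) = phi t).
  { intros t. unfold phi. rabs; auto. }
  assert (Hb1 : phi b = 1) by (unfold phi; rewrite <- E0; auto).
  assert (Hb2 : phi (b - 1) = 1) by (unfold phi; rewrite <- Ew; auto).
  assert (Hhalf : b = 1/2).
  { apply NNPP. intro Hne.
    assert (Hgen : forall lo hi, 0 <= lo < hi -> phi lo = 1 -> phi hi = 1 -> False).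
    { intros lo hi Hlh Hlo Hhi.
      assert (P0 : 1 <= phi 0).
      { assert (E : lin x y a lo = vadd (vscale ((hi - lo) / hi) (lin x y a 0)) (vscale (lo / hi) (lin x y a hi)))
          by veq.
        assert (H := N_tri HN (vscale ((hi - lo) / hi) (lin x y a 0)) (vscale (lo / hi) (lin x y a hi))).
        rewrite <- E, !(N_scale HN) in H. fold (phi lo) (phi 0) (phi hi) in H.
        rewrite Hlo, Hhi, !Rabs_right in H.
        - assert (lo / hi = lo * / hi) by reflexivity.
          assert ((hi - lo) / hi = 1 - lo / hi) by (field; lra).
          assert (lo / hi < 1).
          { apply Rmult_lt_reg_r with hi; [lra|]. unfold Rdiv. rewrite Rmult_assoc, Rinv_l; lra. }
          nra.
        - apply Rle_ge, Rle_mult_inv_pos; lra.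
        - apply Rle_ge, Rle_mult_inv_pos; lra. }
      assert (Hm : phi (- hi) = 1) by (rewrite <- Hev, Rabs_Ropp, Hev; auto).
      assert (P1 : phi 0 <= 1).
      { assert (E : lin x y a 0 = vscale (1/2) (vadd (lin x y a hi) (lin x y a (- hi)))) by veq.
        unfold phi. rewrite E, (N_scale HN). 
        assert (H := N_tri HN (lin x y a hi) (lin x y a (- hi))).
        fold (phi hi) (phi (- hi)) in H. rewrite Hhi, Hm in H.
        rewrite Rabs_right by lra. lra. }
      assert (Heq : lin x y a hi = lin x y a (- hi)).
      { apply (strict_conv HN HI); auto.
        unfold phi in *.
        replace (vscale (1/2) (vadd (lin x y a hi) (lin x y a (- hi)))) with (lin x y a 0) by veq.
        lra. }
      apply lin_inj in Heq; auto. lra. }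
    destruct (Rlt_le_dec (Rabs b) (Rabs (b - 1))).
    - apply (Hgen (Rabs b) (Rabs (b - 1))); [split; auto; apply Rabs_pos| rewrite Hev; auto | rewrite Hev; auto].
    - destruct r as [r|r].
      + apply (Hgen (Rabs (b - 1)) (Rabs b)); [split; auto; apply Rabs_pos| rewrite Hev; auto | rewrite Hev; auto].
      + apply Hne. revert r. rabs; lra. }
  subst b.
  assert (Ha : a <> 0).
  { intro Ea. subst a. apply Hne2. rewrite Ew, E0. veq. }
  replace (vadd x0 w) with (vscale (2 * a) x) by (rewrite Ew, E0; veq).
  fold y. clearbody y. clear Hev Hb1 Hb2 phi.
  assert (B := bk_scale HN x y (2 * a) 1 Bx ltac:(lra) ltac:(lra)).
  replace (vscale 1 y) with y in B by veq. exact B.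
Qed.


Definition Qf (v : vec) := fst v * fst v + snd v * snd v.

Lemma Qf_opp v : Qf (vscale (-1) v) = Qf v.
Proof. destruct v; unfold Qf; vsimpl; ring. Qed.

Lemma Qf_scale s v : Qf (vscale s v) = s * s * Qf v.
Proof. destruct v; unfold Qf; vsimpl; ring. Qed.


Lemma euclid_lower {N} (HN : is_norm N) :
  birkhoff N (1, 0) (0, 1) -> N (1, 0) = 1 -> N (0, 1) = 1 ->
  forall a b, Rabs a <= N (a, b) /\ Rabs b <= 2 * N (a, b).
Proof.
  intros B H1 H2 a b.
  assert (E : (a, b) = lin (1, 0) (0, 1) a b) by veq.
  assert (Ha : Rabs a <= N (a, b)) by (rewrite E; pose proof (bk_ge HN _ _ a b B); rewrite H1 in H; lra).
  split; auto.
  assert (E2 : (0, b) = vadd (a, b) (vscale (-1) (a, 0))) by veq.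
  assert (Hb : N (0, b) = Rabs b) by (replace (0, b) with (vscale b (0, 1)) by veq; rewrite (N_scale HN), H2; ring).
  assert (Ha0 : N (a, 0) = Rabs a) by (replace (a, 0) with (vscale a (1, 0)) by veq; rewrite (N_scale HN), H1; ring).
  pose proof (N_tri HN (a, b) (vscale (-1) (a, 0))). rewrite <- E2, Hb, (N_opp HN), Ha0 in H. lra.
Qed.

Lemma sigma_bk {N} (HN : is_norm N) (HI : ISO N) :
  birkhoff N (1, 0) (0, 1) -> N (1, 0) = 1 -> N (0, 1) = 1 ->
  forall al be, N (al, be) = 1 -> be <> 0 ->
  birkhoff N (al, be) ((1 - al * al) / be, - al).
Proof.
  intros B H1 H2 al be Hw Hbe.
  assert (Bi : birkhoff N (vadd (1, 0) (al, be)) (vsub (1, 0) (al, be))).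
  { apply (isosceles HN HI); auto.
    - intro E; injection E; intros; lra.
    - intro E; vsimpl; injection E; intros; lra. }
  split; [|split].
  - intro E; injection E; intros; lra.
  - intro E; injection E; intros. destruct (Req_dec al 0).
    + subst. assert (E1 : 1 = (1 - 0 * 0) / be * be) by (field; auto). rewrite H0 in E1. lra.
    + lra.
  - intros t. rewrite Hw.
    set (A := (be + t * (1 - al)) / (2 * be)). set (Bc := (be - (1 + al) * t) / (2 * be)).
    transitivity (N (lin (vadd (1, 0) (al, be)) (vsub (1, 0) (al, be)) A (- Bc))).
    { right. f_equal. unfold A, Bc. veq. }
    rewrite HI by auto.
    replace (lin (vadd (1, 0) (al, be)) (vsub (1, 0) (al, be)) A Bc) with (lin (1, 0) (0, 1) 1 t)
      by (unfold A, Bc; veq).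
    pose proof (bk_ge HN _ _ 1 t B). rewrite H1, Rabs_R1 in H. lra.
Qed.

Lemma Qf_lip {N} (HN : is_norm N) :
  birkhoff N (1, 0) (0, 1) -> N (1, 0) = 1 -> N (0, 1) = 1 ->
  forall p q, N p = 1 -> N q = 1 -> Rabs (Qf p - Qf q) <= 10 * N (vsub p q).
Proof.
  intros B H1 H2 [p1 p2] [q1 q2] Hp Hq.
  pose proof (euclid_lower HN B H1 H2 p1 p2) as [Lp1 Lp2].
  pose proof (euclid_lower HN B H1 H2 q1 q2) as [Lq1 Lq2].
  unfold vsub in *; vsimpl.
  pose proof (euclid_lower HN B H1 H2 (p1 + -1 * q1) (p2 + -1 * q2)) as [Ld1 Ld2].
  set (D := N (p1 + -1 * q1, p2 + -1 * q2)) in *.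
  rewrite Hp in *; rewrite Hq in *. unfold Qf; simpl.
  replace (p1 * p1 + p2 * p2 - (q1 * q1 + q2 * q2)) with
    ((p1 + -1 * q1) * (p1 + q1) + (p2 + -1 * q2) * (p2 + q2)) by ring.
  eapply Rle_trans. apply Rabs_triang. rewrite !Rabs_mult.
  assert (Rabs (p1 + q1) <= 2) by (eapply Rle_trans; [apply Rabs_triang|lra]).
  assert (Rabs (p2 + q2) <= 4) by (eapply Rle_trans; [apply Rabs_triang|lra]).
  pose proof (Rabs_pos (p1 + -1 * q1)). pose proof (Rabs_pos (p2 + -1 * q2)).
  pose proof (Rabs_pos (p1 + q1)). pose proof (Rabs_pos (p2 + q2)).
  nra.
Qed.

Lemma Qf_extrema {N} (HN : is_norm N) :
  birkhoff N (1, 0) (0, 1) -> N (1, 0) = 1 -> N (0, 1) = 1 ->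
  exists wm wM, N wm = 1 /\ N wM = 1 /\ forall z, N z = 1 -> Qf wm <= Qf z <= Qf wM.
Proof.
  intros B H1 H2.
  destruct (XX_lip HN) as [L [HL HXL]].
  set (f := fun s => Qf (XX N s)).
  assert (Hf : forall s t, Rabs (f s - f t) <= (10 * L) * Rabs (s - t)).
  { intros s t. unfold f. eapply Rle_trans. apply (Qf_lip HN B H1 H2); apply XX_unit; auto.
    rewrite Rmult_assoc. apply Rmult_le_compat_l; [lra|]. apply HXL. }
  destruct (continuity_ab_min f (-1) 3) as [sm [Hm _]]; [lra| intros; eapply lip_cont; eauto |].
  destruct (continuity_ab_maj f (-1) 3) as [sM [HM _]]; [lra| intros; eapply lip_cont; eauto |].
  exists (XX N sm), (XX N sM). split; [apply XX_unit; auto|split; [apply XX_unit; auto|]].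
  intros z Hz. destruct (XX_cover HN z Hz) as [s [Hs [-> | ->]]].
  - split; [apply (Hm s Hs) | apply (HM s Hs)].
  - rewrite Qf_opp. split; [apply (Hm s Hs) | apply (HM s Hs)].
Qed.


Lemma Qf_pos v : v <> vzero -> 0 < Qf v.
Proof.
  intros H. destruct v as [a b]. unfold Qf; simpl.
  destruct (Req_dec a 0); destruct (Req_dec b 0).
  - subst; exfalso; apply H; reflexivity.
  - nra. - nra. - nra.
Qed.

Lemma normalize_Q {N} (HN : is_norm N) p : 1 <= N p ->
  Qf (vscale (/ N p) p) <= Qf p /\ N (vscale (/ N p) p) = 1.
Proof.
  intros Hp. rewrite Qf_scale. split.
  - assert (0 <= Qf p) by (destruct p; unfold Qf; simpl; nra).
    assert (0 < / N p <= 1).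
    { split. apply Rinv_0_lt_compat; lra. rewrite <- Rinv_1. apply Rinv_le_contravar; lra. }
    apply Rle_trans with (1 * Qf p); [apply Rmult_le_compat_r; nra | lra].
  - rewrite (N_scale HN), Rabs_right. field; lra. left; apply Rinv_0_lt_compat; lra.
Qed.

Lemma min_perp {N} (HN : is_norm N) w :
  N w = 1 -> (forall z, N z = 1 -> Qf w <= Qf z) ->
  forall d, birkhoff N w d -> fst w * fst d + snd w * snd d = 0.
Proof.
  intros Hw Hmin d Bd. apply NNPP. intro Hk.
  set (k := fst w * fst d + snd w * snd d) in *.
  assert (Hq : 0 < Qf d) by (apply Qf_pos; apply Bd).
  set (t := - k / Qf d).
  set (p := vadd w (vscale t d)).
  assert (HQp : Qf p = Qf w - k * k / Qf d).
  { unfold p, t, k, Qf in *. vdestr; vsimpl. field. lra. }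
  assert (Hp1 : 1 <= N p) by (destruct Bd as [_ [_ Hb]]; specialize (Hb t); rewrite Hw in Hb; unfold p; lra).
  destruct (normalize_Q HN p Hp1) as [HQ Hn].
  specialize (Hmin _ Hn).
  assert (0 < k * k / Qf d) by (apply Rdiv_lt_0_compat; nra).
  lra.
Qed.

Lemma max_bk {N} (HN : is_norm N) w :
  N w = 1 -> (forall z, N z = 1 -> Qf z <= Qf w) ->
  birkhoff N w (snd w, - fst w).
Proof.
  intros Hw Hmax.
  assert (Hw0 : w <> vzero) by (intro E; rewrite E, (N_zero HN) in Hw; lra).
  pose proof (Qf_pos w Hw0) as HQ.
  split; [auto|split].
  - intro E. apply Hw0. destruct w as [a b]. simpl in E. injection E; intros.
    unfold vzero; f_equal; lra.
  - intros t. rewrite Hw. apply Rnot_lt_ge. intro Hlt.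
    set (p := vadd w (vscale t (snd w, - fst w))) in *.
    assert (HQp : Qf p = Qf w * (1 + t * t)) by (unfold p, Qf; vdestr; vsimpl; ring).
    assert (Hp0 : p <> vzero) by (intro E; rewrite E in HQp; assert (Qf vzero = 0) by (unfold Qf; simpl; ring); nra).
    pose proof (N_pos HN p Hp0).
    assert (Hn : N (vscale (/ N p) p) = 1).
    { rewrite (N_scale HN), Rabs_right. field; lra. left; apply Rinv_0_lt_compat; lra. }
    specialize (Hmax _ Hn). rewrite Qf_scale in Hmax.
    assert (1 < / N p) by (rewrite <- Rinv_1; apply Rinv_lt_contravar; lra).
    assert (Qf w <= Qf p) by (rewrite HQp; nra).
    set (i := / N p) in *. assert (i * i > 1) by nra.
    assert (i * i * Qf p > Qf p) by nra. lra.
Qed.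

Lemma perp_Q1 {N} (HN : is_norm N) (HI : ISO N) :
  birkhoff N (1, 0) (0, 1) -> N (1, 0) = 1 -> N (0, 1) = 1 ->
  forall w, N w = 1 -> (forall d, birkhoff N w d -> fst w * fst d + snd w * snd d = 0) ->
  Qf w = 1.
Proof.
  intros B H1 H2 [al be] Hw HP. unfold Qf; simpl.
  destruct (Req_dec be 0) as [Hb|Hb].
  - subst. replace (al, 0) with (vscale al (1, 0)) in Hw by veq.
    rewrite (N_scale HN), H1 in Hw. revert Hw; rabs; nra.
  - pose proof (sigma_bk HN HI B H1 H2 al be Hw Hb) as S.
    apply HP in S. simpl in S.
    destruct (Req_dec al 0) as [Ha|Ha].
    + subst. replace (0, be) with (vscale be (0, 1)) in Hw by veq.
      rewrite (N_scale HN), H2 in Hw. revert Hw; rabs; nra.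
    + assert (E : al * (1 - al * al - be * be) = 0).
      { replace (al * (1 - al * al - be * be)) with ((al * ((1 - al * al) / be) + be * - al) * be)
          by (field; auto). rewrite S; ring. }
      destruct (Rmult_integral _ _ E); lra.
Qed.

Lemma euclid {N} (HN : is_norm N) (HI : ISO N) :
  birkhoff N (1, 0) (0, 1) -> N (1, 0) = 1 -> N (0, 1) = 1 ->
  forall v, N v = sqrt (Qf v).
Proof.
  intros B H1 H2.
  destruct (Qf_extrema HN B H1 H2) as [wm [wM [Hm [HM Hext]]]].
  assert (Qm : Qf wm = 1).
  { apply (perp_Q1 HN HI B H1 H2 wm Hm). apply (min_perp HN wm Hm).
    intros z Hz. apply Hext; auto. }
  assert (QM : Qf wM = 1).
  { apply (perp_Q1 HN HI B H1 H2 wM HM). intros d Bd.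
    assert (Bt := max_bk HN wM HM (fun z Hz => proj2 (Hext z Hz))).
    pose proof (corner HN HI _ _ _ Bt Bd). unfold det in H; simpl in H. lra. }
  assert (Hall : forall z, N z = 1 -> Qf z = 1) by (intros z Hz; specialize (Hext z Hz); lra).
  intros v. destruct (classic (v = vzero)) as [->|Hv].
  - rewrite (N_zero HN). unfold Qf, vzero; simpl. replace (0 * 0 + 0 * 0) with 0 by ring.
    rewrite sqrt_0; auto.
  - pose proof (N_pos HN v Hv).
    assert (Hn : N (vscale (/ N v) v) = 1).
    { rewrite (N_scale HN), Rabs_right. field; lra. left; apply Rinv_0_lt_compat; lra. }
    apply Hall in Hn. rewrite Qf_scale in Hn.
    assert (Qf v = N v * N v).
    { replace (Qf v) with (N v * N v * (/ N v * / N v * Qf v)) by (field; lra). rewrite Hn; ring. }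
    rewrite H0. rewrite sqrt_square; lra.
Qed.


Definition Lmap (x1 y1 : vec) (v : vec) := lin x1 y1 (fst v) (snd v).

Lemma I2 {N} (HN : is_norm N) : (forall d, cS_values N d -> d <= 0) -> from_inner_product N.
Proof.
  intros Hd. pose proof (iso_of_values HN Hd) as HI.
  assert (Hy : ((0, 1) : vec) <> vzero) by (unfold vzero; intro E; injection E; lra).
  destruct (bk_exists HN _ Hy) as [x0 B0].
  pose proof B0 as [Hx0 [Hy0 _]].
  pose proof (N_pos HN _ Hx0). pose proof (N_pos HN _ Hy0).
  set (x1 := vscale (/ N x0) x0). set (y1 := vscale (/ N (0,1)) (0,1)).
  assert (B1 : birkhoff N x1 y1) by (apply bk_scale; auto; apply Rinv_neq_0_compat; lra).
  assert (Nx1 : N x1 = 1).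
  { unfold x1. rewrite (N_scale HN), Rabs_right. field; lra. left; apply Rinv_0_lt_compat; lra. }
  assert (Ny1 : N y1 = 1).
  { unfold y1. rewrite (N_scale HN), Rabs_right. field; lra. left; apply Rinv_0_lt_compat; lra. }
  clearbody x1 y1.
  pose proof (bk_det HN _ _ B1) as D.
  set (L := Lmap x1 y1).
  assert (Llin : forall a b u v, L (lin u v a b) = lin (L u) (L v) a b)
    by (intros; unfold L, Lmap; veq).
  assert (Linj : forall u, L u = vzero -> u = vzero).
  { intros [u1 u2] E. unfold L, Lmap in E; simpl in E.
    destruct (bk_indep HN _ _ _ _ B1 E) as [-> ->]. reflexivity. }
  set (N' := fun v => N (L v)).
  assert (HN' : is_norm N').
  { split; [|split].
    - intros v; split; intro E.
      + apply Linj, (N_eq0 HN), E.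
      + rewrite E. unfold N'. replace (L vzero) with vzero by (unfold L, Lmap; veq).
        apply (N_zero HN).
    - intros s v. unfold N'. replace (L (vscale s v)) with (vscale s (L v)) by (unfold L, Lmap; veq).
      apply (N_scale HN).
    - intros u v. unfold N'. replace (L (vadd u v)) with (vadd (L u) (L v)) by (unfold L, Lmap; veq).
      apply (N_tri HN). }
  assert (Btr : forall x y, birkhoff N' x y -> birkhoff N (L x) (L y)).
  { intros x y [Hx [Hy' Hb]]. split; [|split].
    - intro E; apply Hx, Linj, E.
    - intro E; apply Hy', Linj, E.
    - intros t. specialize (Hb t). unfold N' in Hb.
      replace (L (vadd x (vscale t y))) with (vadd (L x) (vscale t (L y))) in Hb
        by (unfold L, Lmap; veq). auto. }
  assert (HI' : ISO N').
  { intros x y a b Bxy. unfold N'. rewrite !Llin. apply HI, Btr, Bxy. }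
  assert (E10 : L (1, 0) = x1) by (unfold L, Lmap; veq).
  assert (E01 : L (0, 1) = y1) by (unfold L, Lmap; veq).
  assert (B' : birkhoff N' (1, 0) (0, 1)).
  { split; [|split].
    - intro E; injection E; lra.
    - intro E; injection E; lra.
    - intros t. unfold N'.
      replace (L (vadd (1, 0) (vscale t (0, 1)))) with (lin x1 y1 1 t) by (unfold L, Lmap; veq).
      rewrite E10. pose proof (bk_ge HN _ _ 1 t B1). rewrite Rabs_R1 in H1. lra. }
  assert (Eu := euclid HN' HI' B' ltac:(unfold N'; rewrite E10; auto) ltac:(unfold N'; rewrite E01; auto)).
  set (cc := fun u : vec => (det u y1 / det x1 y1, det x1 u / det x1 y1)).
  assert (Hc : forall u, L (cc u) = u) by (intros u; unfold L, Lmap, cc; simpl; symmetry; apply decomp; auto).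
  exists (fun u w => fst (cc u) * fst (cc w) + snd (cc u) * snd (cc w)).
  split; [|split; [|split; [|split]]].
  - intros; ring.
  - intros u v w. unfold cc; simpl. unfold det; vdestr; vsimpl. field; auto.
  - intros s u v. unfold cc; simpl. unfold det; vdestr; vsimpl. field; auto.
  - intros v Hv. change (0 < Qf (cc v)). apply Qf_pos. intro E. apply Hv.
    rewrite <- (Hc v), E. unfold L, Lmap; veq.
  - intros v. rewrite <- (Hc v) at 1. change (N' (cc v) = sqrt (Qf (cc v))). apply Eu.
Qed.


Lemma approx_pq {N} (HN : is_norm N) e : 0 < e ->
  (exists d, cS_values N d /\ 8 / 3 - e / 4 <= d) ->
  e <= 1 ->
  exists p q, N p = 1 /\ N q = 1 /\ 2 - e <= N (vadd p q) /\ 2 - e <= N (vsub p q).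
Proof.
  intros He [d [[x [y [Bxy [M [m [HM [Hm ->]]]]]]] Hd]] He1.
  set (e' := e / 4) in *.
  destruct (value_bounds HN x y M m Bxy HM Hm) as [[HM1 HM3] [[Hm1 Hm2] _]].
  assert (HMe : 3 - e' <= M).
  { assert (M - / M >= 8 / 3 - e') by lra.
    assert (/ M >= / 3) by (apply Rle_ge, Rinv_le_contravar; lra).
    lra. }
  assert (Hr : exists r, T_norms N x y r /\ 3 - 2 * e' < r).
  { apply NNPP. intro Hn. destruct HM as [_ HM2].
    assert (M <= M - e').
    { apply HM2. intros r Hr. apply Rnot_lt_le. intro Hlt. apply Hn. exists r. split; auto. lra. }
    unfold e' in *. lra. }
  destruct Hr as [r [Hr Hr3]]. apply Tn_iff in Hr. destruct Hr as [a [b [Hv Hra]]].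
  pose proof Bxy as [Hx0 [Hy0 _]]. pose proof (N_pos HN x Hx0) as Hnx.
  set (A := Rabs a * N x).
  assert (HA1 : A <= 1) by (pose proof (bk_ge HN x y a b Bxy); unfold A; lra).
  assert (HrA : r <= 2 * A + 1).
  { rewrite Hra. replace (lin x y a (- b)) with (vadd (vscale (2 * a) x) (vscale (-1) (lin x y a b))) by veq.
    eapply Rle_trans. apply (N_tri HN). rewrite !(N_scale HN), Rabs_m1, Hv, Rabs_mult.
    unfold A. replace (Rabs 2) with 2 by (rewrite Rabs_right; lra). lra. }
  assert (HA : 1 - e' <= A) by lra.
  assert (Ha : a <> 0) by (intro E; unfold A in HA; rewrite E, Rabs_R0 in HA; unfold e' in *; lra).
  pose proof (Rabs_pos_lt a Ha) as Hpa.
  set (sg := a / (Rabs a * N x)).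
  assert (Hsg : sg <> 0) by (unfold sg; unfold Rdiv; apply Rmult_integral_contrapositive_currified; [auto|apply Rinv_neq_0_compat; nra]).
  set (x' := vscale sg x).
  assert (Nx' : N x' = 1).
  { unfold x', sg. rewrite (N_scale HN). unfold Rdiv. rewrite Rabs_mult, Rabs_inv, Rabs_mult.
    rewrite (Rabs_right (N x)) by lra. rewrite (Rabs_right (Rabs a)) by lra. field; lra. }
  assert (Eax : vscale a x = vscale A x').
  { unfold x', A, sg. veq. }
  assert (B' : birkhoff N x' y).
  { pose proof (bk_scale HN x y sg 1 Bxy Hsg ltac:(lra)) as B.
    replace (vscale 1 y) with y in B by (clear; destruct y; vsimpl; apply pair_eq; ring). exact B. }
  set (v := lin x y a b).
  exists x', v. split; auto. split; auto. split.
  - replace (vadd x' v) with (lin x' y (1 + A) b) by (unfold v, lin; rewrite Eax; veq).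
    pose proof (bk_ge HN x' y (1 + A) b B'). rewrite Nx', Rabs_right in H by (unfold A; pose proof (Rabs_pos a); nra).
    unfold e' in *. lra.
  - assert (E2 : lin x y a (- b) = vsub (vscale (2 * A) x') v).
    { unfold v, lin. replace (vscale (2 * A) x') with (vscale 2 (vscale A x')) by veq.
      rewrite <- Eax. veq. }
    assert (E3 : vscale (2 * A) x' = vadd (vscale (2 * (A - 1)) x') (vscale 2 x')) by veq.
    assert (H1 : r <= 2 * (1 - A) + N (vsub (vscale 2 x') v)).
    { rewrite Hra, E2, E3. unfold vsub at 1.
      replace (vadd (vadd (vscale (2 * (A - 1)) x') (vscale 2 x')) (vscale (-1) v)) with
        (vadd (vscale (2 * (A - 1)) x') (vsub (vscale 2 x') v)) by (unfold vsub; veq).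
      eapply Rle_trans. apply (N_tri HN). rewrite (N_scale HN), Nx'.
      rewrite Rabs_left1 by lra. lra. }
    assert (H2 : N (vsub (vscale 2 x') v) <= 1 + N (vsub x' v)).
    { replace (vsub (vscale 2 x') v) with (vadd x' (vsub x' v)) by (unfold vsub; veq).
      pose proof (N_tri HN x' (vsub x' v)). lra. }
    unfold e' in *. lra.
Qed.


Definition Gf N s t := Rmin (N (vadd (XX N s) (XX N t))) (N (vsub (XX N s) (XX N t))).

Lemma Rmin_lip a b a' b' c : Rabs (a - a') <= c -> Rabs (b - b') <= c -> Rabs (Rmin a b - Rmin a' b') <= c.
Proof. unfold Rmin. repeat destruct Rle_dec; rabs; lra. Qed.

Lemma G_cover {N} (HN : is_norm N) p q : N p = 1 -> N q = 1 ->
  exists s t, -1 <= s <= 3 /\ -1 <= t <= 3 /\ Gf N s t = Rmin (N (vadd p q)) (N (vsub p q)).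
Proof.
  intros Hp Hq. destruct (XX_cover HN p Hp) as [s [Hs Ep]]. destruct (XX_cover HN q Hq) as [t [Ht Eq]].
  exists s, t. split; auto. split; auto. unfold Gf.
  set (a := XX N s) in *. set (b := XX N t) in *. clearbody a b.
  destruct Ep as [-> | ->]; destruct Eq as [-> | ->].
  - reflexivity.
  - replace (vadd a (vscale (-1) b)) with (vsub a b) by (unfold vsub; veq).
    replace (vsub a (vscale (-1) b)) with (vadd a b) by (unfold vsub; veq).
    apply Rmin_comm.
  - replace (vadd (vscale (-1) a) b) with (vscale (-1) (vsub a b)) by (unfold vsub; veq).
    replace (vsub (vscale (-1) a) b) with (vscale (-1) (vadd a b)) by (unfold vsub; veq).
    rewrite !(N_opp HN). apply Rmin_comm.
  - replace (vadd (vscale (-1) a) (vscale (-1) b)) with (vscale (-1) (vadd a b)) by (unfold vsub; veq).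
    replace (vsub (vscale (-1) a) (vscale (-1) b)) with (vscale (-1) (vsub a b)) by (unfold vsub; veq).
    rewrite !(N_opp HN). reflexivity.
Qed.

Lemma G_le2 {N} (HN : is_norm N) s t : Gf N s t <= 2.
Proof.
  unfold Gf. apply Rle_trans with (N (vadd (XX N s) (XX N t))). apply Rmin_l.
  eapply Rle_trans. apply (N_tri HN). rewrite !(XX_unit HN). lra.
Qed.

Lemma G_lip {N} (HN : is_norm N) L :
  (forall s t, N (vsub (XX N s) (XX N t)) <= L * Rabs (s - t)) ->
  forall s s' t t', Rabs (Gf N s t - Gf N s' t') <= L * Rabs (s - s') + L * Rabs (t - t').
Proof.
  intros HL s s' t t'. unfold Gf. apply Rmin_lip.
  - eapply Rle_trans. apply (N_rev_tri HN).
    replace (vsub (vadd (XX N s) (XX N t)) (vadd (XX N s') (XX N t'))) with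
      (vadd (vsub (XX N s) (XX N s')) (vsub (XX N t) (XX N t'))) by (generalize (XX N s) (XX N s') (XX N t) (XX N t'); intros; unfold vsub; veq).
    eapply Rle_trans. apply (N_tri HN). pose proof (HL s s'). pose proof (HL t t'). lra.
  - eapply Rle_trans. apply (N_rev_tri HN).
    replace (vsub (vsub (XX N s) (XX N t)) (vsub (XX N s') (XX N t'))) with
      (vadd (vsub (XX N s) (XX N s')) (vscale (-1) (vsub (XX N t) (XX N t')))) by (generalize (XX N s) (XX N s') (XX N t) (XX N t'); intros; unfold vsub; veq).
    eapply Rle_trans. apply (N_tri HN). rewrite (N_opp HN). pose proof (HL s s'). pose proof (HL t t'). lra.
Qed.

Definition Eset N s := fun g => exists t, -1 <= t <= 3 /\ g = Gf N s t.

Lemma Eset_bound {N} (HN : is_norm N) s : bound (Eset N s).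
Proof. exists 2. intros g [t [_ ->]]. apply G_le2; auto. Qed.

Lemma Eset_ne N s : exists g, Eset N s g.
Proof. exists (Gf N s 0). exists 0. split; [lra|reflexivity]. Qed.

Lemma compact_pq {N} (HN : is_norm N) :
  (forall e, 0 < e -> e <= 1 -> exists p q, N p = 1 /\ N q = 1 /\ 2 - e <= N (vadd p q) /\ 2 - e <= N (vsub p q)) ->
  exists p q, N p = 1 /\ N q = 1 /\ 2 <= N (vadd p q) /\ 2 <= N (vsub p q).
Proof.
  intros Happ.
  destruct (XX_lip HN) as [L [HL0 HL]].
  pose proof (G_lip HN L HL) as GL.
  set (Hf := fun s => proj1_sig (completeness (Eset N s) (Eset_bound HN s) (Eset_ne N s))).
  assert (Hlub : forall s, is_lub (Eset N s) (Hf s)) by (intros s; unfold Hf; destruct completeness; auto).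
  assert (Hlip : forall s s', Rabs (Hf s - Hf s') <= L * Rabs (s - s')).
  { assert (Hone : forall s s', Hf s <= Hf s' + L * Rabs (s - s')).
    { intros s s'. destruct (Hlub s) as [_ H2]. apply H2. intros g [t [Ht ->]].
      destruct (Hlub s') as [H1 _]. assert (Eset N s' (Gf N s' t)) by (exists t; auto).
      apply H1 in H. specialize (GL s s' t t). rewrite Rminus_diag, Rabs_R0, Rmult_0_r, Rplus_0_r in GL.
      apply abs_le_l in GL. lra. }
    intros s s'. apply abs_le_r. pose proof (Hone s s'). pose proof (Hone s' s).
    rewrite Rabs_minus_sym in H0. lra. }
  destruct (continuity_ab_maj Hf (-1) 3) as [s0 [Hs0 Hs0r]]; [lra| intros; eapply lip_cont; eauto |].
  assert (H2 : 2 <= Hf s0).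
  { apply Rnot_lt_le. intro Hlt. set (e := Rmin 1 ((2 - Hf s0) / 2)).
    assert (He : 0 < e /\ e <= 1 /\ e <= (2 - Hf s0) / 2) by (unfold e, Rmin; destruct Rle_dec; lra).
    destruct (Happ e) as [p [q [Hp [Hq [H1 H2]]]]]; [lra|lra|].
    destruct (G_cover HN p q Hp Hq) as [s [t [Hs [Ht HG]]]].
    assert (Hf s >= Gf N s t) by (apply Rle_ge, (Hlub s); exists t; auto).
    specialize (Hs0 s Hs).
    assert (Rmin (N (vadd p q)) (N (vsub p q)) >= 2 - e) by (unfold Rmin; destruct Rle_dec; lra).
    lra. }
  destruct (continuity_ab_maj (Gf N s0) (-1) 3) as [t0 [Ht0 Ht0r]].
  { lra. }
  { intros; eapply (lip_cont _ L). intros t t'. specialize (GL s0 s0 t t').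
    rewrite Rminus_diag, Rabs_R0, Rmult_0_r, Rplus_0_l in GL. auto. }
  assert (HG : Hf s0 <= Gf N s0 t0).
  { apply (Hlub s0). intros g [t [Ht ->]]. apply Ht0; auto. }
  exists (XX N s0), (XX N t0). split; [apply XX_unit; auto|split; [apply XX_unit; auto|]].
  unfold Gf in HG. unfold Rmin in HG. destruct Rle_dec.
  - split; lra.
  - split; lra.
Qed.


Lemma seg_unit {N} (HN : is_norm N) a b l :
  N a = 1 -> N b = 1 -> N (vscale (1/2) (vadd a b)) = 1 -> 0 <= l <= 1 ->
  N (vadd (vscale l a) (vscale (1 - l) b)) = 1.
Proof.
  intros Ha Hb Hm Hl. apply Rle_antisym.
  - eapply Rle_trans. apply (N_tri HN). rewrite !(N_scale HN), Ha, Hb, !Rabs_right; lra.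
  - set (r := vadd (vscale l a) (vscale (1 - l) b)).
    destruct (Rle_dec (1/2) l).
    + assert (E : vscale (1/2) (vadd a b) = vadd (vscale (/ (2 * l)) r) (vscale (1 - / (2 * l)) b))
        by (unfold r; veq).
      rewrite E in Hm. pose proof (N_tri HN (vscale (/ (2 * l)) r) (vscale (1 - / (2 * l)) b)).
      rewrite Hm, !(N_scale HN), Hb in H.
      assert (0 < / (2 * l) <= 1).
      { split. apply Rinv_0_lt_compat; lra. rewrite <- Rinv_1. apply Rinv_le_contravar; lra. }
      rewrite !Rabs_right in H by lra.
      assert (1 * (/ (2 * l)) <= N r * / (2 * l)) by lra.
      apply Rmult_le_reg_r in H1; lra.
    + assert (E : vscale (1/2) (vadd a b) = vadd (vscale (/ (2 * (1 - l))) r) (vscale (1 - / (2 * (1 - l))) a))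
        by (unfold r; veq).
      rewrite E in Hm. pose proof (N_tri HN (vscale (/ (2 * (1 - l))) r) (vscale (1 - / (2 * (1 - l))) a)).
      rewrite Hm, !(N_scale HN), Ha in H.
      assert (0 < / (2 * (1 - l)) <= 1).
      { split. apply Rinv_0_lt_compat; lra. rewrite <- Rinv_1. apply Rinv_le_contravar; lra. }
      rewrite !Rabs_right in H by lra.
      assert (1 * (/ (2 * (1 - l))) <= N r * / (2 * (1 - l))) by lra.
      apply Rmult_le_reg_r in H1; lra.
Qed.

Lemma sq_norm {N} (HN : is_norm N) u v :
  (forall al be, sqb al be -> N (lin u v al be) = 1) ->
  forall al be, N (lin u v al be) = Rmax (Rabs al) (Rabs be).
Proof.
  intros Hunit al be.
  destruct (classic (al = 0 /\ be = 0)) as [[-> ->]|Hne].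
  - replace (lin u v 0 0) with vzero by veq. rewrite (N_zero HN), Rabs_R0.
    unfold Rmax; destruct (Rle_dec 0 0); lra.
  - set (s := Rmax (Rabs al) (Rabs be)).
    pose proof (Rmax_l (Rabs al) (Rabs be)). pose proof (Rmax_r (Rabs al) (Rabs be)).
    fold s in H, H0.
    assert (Hs0 : 0 < s).
    { destruct (Req_dec al 0).
      - assert (be <> 0) by tauto. pose proof (Rabs_pos_lt be H2). lra.
      - pose proof (Rabs_pos_lt al H1). lra. }
    assert (H1 : N (lin u v (al / s) (be / s)) = 1).
    { apply Hunit. unfold sqb, Rdiv. rewrite !Rabs_mult, Rabs_inv, (Rabs_right s) by lra.
      assert (HH : forall x, x <= s -> x * / s <= 1).
      { intros x Hx. apply Rmult_le_reg_r with s; [lra|]. rewrite Rmult_assoc, Rinv_l by lra; lra. }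
      split. apply HH; lra. split. apply HH; lra.
      clear HH. unfold s, Rmax in *. destruct (Rle_dec (Rabs al) (Rabs be)).
      all: try (right; apply Rinv_r; lra); try (left; apply Rinv_r; lra); try lra. }
    replace (lin u v (al / s) (be / s)) with (vscale (/ s) (lin u v al be)) in H1 by veq.
    rewrite (N_scale HN), Rabs_right in H1.
    + apply Rmult_eq_reg_l with (/ s). rewrite H1; field; lra.
      apply Rinv_neq_0_compat; lra.
    + left; apply Rinv_0_lt_compat; lra.
Qed.

Lemma rect_of_sq {N} (HN : is_norm N) u v : det u v <> 0 ->
  (forall al be, N (lin u v al be) = Rmax (Rabs al) (Rabs be)) -> rectilinear N.
Proof.
  intros D Hn.
  exists (lin u v 1 1), (lin u v (-1) 1), (lin u v (-1) (-1)), (lin u v 1 (-1)).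
  split; [veq|split].
  - unfold det in *. vdestr; unfold lin in *; vsimpl. intro E. apply D. nra.
  - intros z. unfold unit_circle, segment. split.
    + intros Hz. pose proof (decomp u v z D) as Ez.
      set (al := det z v / det u v) in *. set (be := det u z / det u v) in *. clearbody al be.
      rewrite Ez, Hn in Hz.
      assert (Hs : Rabs al <= 1 /\ Rabs be <= 1 /\ (Rabs al = 1 \/ Rabs be = 1))
        by (revert Hz; unfold Rmax; destruct Rle_dec; intros; repeat split; lra).
      destruct Hs as [H1 [H2 [H3|H3]]].
      * assert (al = 1 \/ al = -1) as [->| ->] by (revert H3; rabs; lra).
        -- right; right; right. exists ((be + 1) / 2). split. apply abs_le_l in H2; lra. rewrite Ez; veq.
        -- right; left. exists ((1 - be) / 2). split. apply abs_le_l in H2; lra. rewrite Ez; veq.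
      * assert (be = 1 \/ be = -1) as [->| ->] by (revert H3; rabs; lra).
        -- left. exists ((1 - al) / 2). split. apply abs_le_l in H1; lra. rewrite Ez; veq.
        -- right; right; left. exists ((al + 1) / 2). split. apply abs_le_l in H1; lra. rewrite Ez; veq.
    + intros Hz.
      destruct Hz as [[t [Ht ->]]|[[t [Ht ->]]|[[t [Ht ->]]|[t [Ht ->]]]]].
      * replace (vadd _ _) with (lin u v (1 - 2 * t) 1) by veq. rewrite Hn. unfold Rmax; rabs; destruct Rle_dec; lra.
      * replace (vadd _ _) with (lin u v (-1) (1 - 2 * t)) by veq. rewrite Hn. unfold Rmax; rabs; destruct Rle_dec; lra.
      * replace (vadd _ _) with (lin u v (2 * t - 1) (-1)) by veq. rewrite Hn. unfold Rmax; rabs; destruct Rle_dec; lra.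
      * replace (vadd _ _) with (lin u v 1 (2 * t - 1)) by veq. rewrite Hn. unfold Rmax; rabs; destruct Rle_dec; lra.
Qed.

Lemma rect_of_pq {N} (HN : is_norm N) p q :
  N p = 1 -> N q = 1 -> 2 <= N (vadd p q) -> 2 <= N (vsub p q) -> rectilinear N.
Proof.
  intros Hp Hq H1 H2.
  assert (E1 : N (vadd p q) = 2).
  { apply Rle_antisym; auto. eapply Rle_trans. apply (N_tri HN). lra. }
  assert (E2 : N (vsub p q) = 2).
  { apply Rle_antisym; auto. eapply Rle_trans. apply (N_tri HN). rewrite (N_opp HN). lra. }
  set (u := vscale (1/2) (vsub p q)). set (v := vscale (1/2) (vadd p q)).
  assert (Nu : N u = 1) by (unfold u; rewrite (N_scale HN), E2, Rabs_right; lra).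
  assert (Nv : N v = 1) by (unfold v; rewrite (N_scale HN), E1, Rabs_right; lra).
  assert (Ep : p = lin u v 1 1) by (unfold u, v; veq).
  assert (Eq : q = lin u v (-1) 1) by (unfold u, v; veq).
  assert (Hq' : N (lin u v (-1) 1) = 1) by (rewrite <- Eq; auto).
  assert (Hp' : N (lin u v 1 1) = 1) by (rewrite <- Ep; auto).
  assert (Hmp : N (lin u v (-1) (-1)) = 1).
  { replace (lin u v (-1) (-1)) with (vscale (-1) (lin u v 1 1)) by veq. rewrite (N_opp HN); auto. }
  assert (Edge1 : forall al, -1 <= al <= 1 -> N (lin u v al 1) = 1).
  { intros al Hal. replace (lin u v al 1) with (vadd (vscale ((1 + al) / 2) (lin u v 1 1)) (vscale (1 - (1 + al) / 2) (lin u v (-1) 1))) by veq.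
    apply (seg_unit HN); auto; [|lra].
    replace (vscale (1 / 2) (vadd (lin u v 1 1) (lin u v (-1) 1))) with v by (unfold lin; veq). auto. }
  assert (Edge2 : forall be, -1 <= be <= 1 -> N (lin u v (-1) be) = 1).
  { intros be Hbe. replace (lin u v (-1) be) with (vadd (vscale ((1 + be) / 2) (lin u v (-1) 1)) (vscale (1 - (1 + be) / 2) (lin u v (-1) (-1)))) by veq.
    apply (seg_unit HN); auto; [|lra].
    replace (vscale (1 / 2) (vadd (lin u v (-1) 1) (lin u v (-1) (-1)))) with (vscale (-1) u) by (unfold lin; veq).
    rewrite (N_opp HN); auto. }
  assert (Hsq : forall al be, sqb al be -> N (lin u v al be) = 1).
  { intros al be [Ha [Hb [Hc|Hc]]].
    - assert (al = 1 \/ al = -1) as [->| ->] by (revert Hc; rabs; lra).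
      + replace (lin u v 1 be) with (vscale (-1) (lin u v (-1) (- be))) by veq.
        rewrite (N_opp HN). apply Edge2. apply abs_le_l in Hb; lra.
      + apply Edge2. apply abs_le_l in Hb; lra.
    - assert (be = 1 \/ be = -1) as [->| ->] by (revert Hc; rabs; lra).
      + apply Edge1. apply abs_le_l in Ha; lra.
      + replace (lin u v al (-1)) with (vscale (-1) (lin u v (- al) 1)) by veq.
        rewrite (N_opp HN). apply Edge1. apply abs_le_l in Ha; lra. }
  pose proof (sq_norm HN u v Hsq) as Hn.
  apply (rect_of_sq HN u v); auto.
  intro D. unfold det in D.
  assert (F1 : lin u v (fst v) (- fst u) = vzero).
  { unfold lin, vzero; vsimpl. apply pair_eq; nra. }
  assert (F2 : lin u v (snd v) (- snd u) = vzero).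
  { unfold lin, vzero; vsimpl. apply pair_eq; nra. }
  assert (R1 : Rmax (Rabs (fst v)) (Rabs (- fst u)) = 0) by (rewrite <- Hn, F1; apply (N_zero HN)).
  assert (R2 : Rmax (Rabs (snd v)) (Rabs (- snd u)) = 0) by (rewrite <- Hn, F2; apply (N_zero HN)).
  rewrite Rabs_Ropp in R1, R2.
  assert (fst u = 0) by (revert R1; unfold Rmax; destruct Rle_dec; intros; rabs; lra).
  assert (snd u = 0) by (revert R2; unfold Rmax; destruct Rle_dec; intros; rabs; lra).
  assert (u = vzero) by (clear - H H0; destruct u; simpl in *; subst; reflexivity).
  rewrite H3, (N_zero HN) in Nu. lra.
Qed.


Lemma R2 {N} (HN : is_norm N) :
  (forall eps, 0 < eps -> exists d, cS_values N d /\ 8 / 3 - eps <= d) -> rectilinear N.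
Proof.
  intros Happ. destruct (compact_pq HN) as [p [q [Hp [Hq [H1 H2]]]]].
  - intros e He He1. apply (approx_pq HN e He); auto. apply Happ. lra.
  - apply (rect_of_pq HN p q); auto.
Qed.

Theorem theorem5p1 (N : vec -> R) (HN : is_norm N) :
  exists c : R, is_cS N c /\
    0 <= c <= 8 / 3 /\
    (c = 0 <-> from_inner_product N) /\
    (c = 8 / 3 <-> rectilinear N).
Proof.
  apply (assemble HN (I1 HN) (I2 HN) (R1 HN) (R2 HN)).
Qed.
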